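(* Let $M,N\in\Lambda$. If $\mathrm{NF}(\mathcal T(M))=\mathrm{NF}(\mathcal T(N))$ then, for every head context $C[-]$, we have $\mathrm{NF}(\mathcal T(C[M]))=\mathrm{NF}(\mathcal T(C[N]))$.
   Context: $\lambda$-terms and values: $M::=V\mid MN$, $V::=x\mid\lambda x.M$, up to $\alpha$-conversion. A head context is $C[-]=(\lambda x_1\dots x_n.[-])V_1\cdots V_m$ with $n,m\ge0$ and $V_1,\dots,V_m$ values; $C[M]$ is obtained by replacing the hole by $M$ (possibly capturing free variables). Resource calculus: resource values $v::=x\mid\lambda x.t$; simple terms $s,t::=st\mid[v_1,\dots,v_k]$ (bags are finite multisets); $[x^n]$ is $n$ copies of $x$. Linear substitution $e\langle x:=v_1,\dots,v_n\rangle$ is the set of terms obtained by replacing the $n$ free occurrences of $x$ in $e$ bijectively by $v_1,\dots,v_n$ (over all permutations), or $\emptyset$ if $x$ does not occur exactly $n$ times free. Constructors extend multilinearly to sets. Rules: $(\beta_r)$ $[\lambda x.t][v_1,\dots,v_n]\to t\langle x:=v_1,\dots,v_n\rangle$; $(0)$ $[v_1,\dots,v_n]t\to\emptyset$ if $n\ne1$; $(\sigma_1)$ $[\lambda x.t]s_1s_2\to[\lambda x.ts_2]s_1$ if $x\notin\mathrm{FV}(s_1)$; $(\sigma_3)$ $[v]([\lambda x.t]s)\to[\lambda x.[v]t]s$ if $x\notin\mathrm{FV}(v)$. $\to_{\mathsf r}$ is the closure of these rules under abstraction, both sides of application, elements of bags, and on finite sets ($e\to\mathcal E_1$, $e\notin\mathcal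 E_2$ imply $\{e\}\cup\mathcal E_2\to\mathcal E_1\cup\mathcal E_2$); it is confluent and strongly normalizing, $\mathrm{nf}(e)$ is the normal form and $\mathrm{NF}(\mathcal E)=\bigcup_{e\in\mathcal E}\mathrm{nf}(e)$. Taylor expansion: $\mathcal T(x)=\{[x^n]\mid n\ge0\}$, $\mathcal T(\lambda x.N)=\{[\lambda x.t_1,\dots,\lambda x.t_n]\mid n\ge0,\ t_i\in\mathcal T(N)\}$, $\mathcal T(PQ)=\{st\mid s\in\mathcal T(P),t\in\mathcal T(Q)\}$. *)

(* Defs.v *)
(* Lambda-terms and resource terms in de Bruijn notation
   (this implements "up to alpha-conversion").  Bags are lists, taken up
   to permutation (recursively) via [req] below, which implements
   "bags are finite multisets".  Finite sets of resource terms are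
   predicates [rterm -> Prop]. *)
From Stdlib Require Import List Permutation Arith.
Import ListNotations.

Inductive lterm : Type :=
| LVar : nat -> lterm
| LLam : lterm -> lterm
| LApp : lterm -> lterm -> lterm.

Definition is_lval (V : lterm) : Prop :=
  match V with LApp _ _ => False | _ => True end.

(* head context C[-] = (\x1...xn.[-]) V1 ... Vm, plugged with M:
   M is put under n binders WITHOUT shifting (capture of its free
   indices 0..n-1 by x_n..x_1). *)
Fixpoint lams (n : nat) (M : lterm) : lterm :=
  match n with 0 => M | S n' => LLam (lams n' M) end.

Definition plug (n : nat) (Vs : list lterm) (M : lterm) : lterm :=
  fold_left LApp Vs (lams n M).

Inductive rterm : Type :=
| RApp : rterm -> rterm -> rterm
| RBag : list rval -> rterm
with rval : Type :=
| RVar : nat -> rval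
| RLam : rterm -> rval.

Fixpoint tlift (c : nat) (t : rterm) : rterm :=
  match t with
  | RApp s u => RApp (tlift c s) (tlift c u)
  | RBag b => RBag (map (vlift c) b)
  end
with vlift (c : nat) (v : rval) : rval :=
  match v with
  | RVar j => RVar (if Nat.leb c j then S j else j)
  | RLam t => RLam (tlift (S c) t)
  end.

(* Linear substitution, one bijection at a time: [LSubT k vs t t'] holds
   when the free occurrences of the variable of index k in t, read left
   to right, are replaced by the values of vs in that order (each lifted
   by the number k of binders crossed), other free indices above k being
   decremented (the binder of the redex disappears).  It fails (no t')
   unless the number of occurrences equals the length of vs. *)
Inductive LSubT (k : nat) : list rval -> rterm -> rterm -> Prop :=
| LS_app : forall vs1 vs2 s s' u u',
    LSubT k vs1 s s' -> LSubT k vs2 u u' ->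
    LSubT k (vs1 ++ vs2) (RApp s u) (RApp s' u')
| LS_bag : forall vs b b',
    LSubB k vs b b' -> LSubT k vs (RBag b) (RBag b')
with LSubB (k : nat) : list rval -> list rval -> list rval -> Prop :=
| LS_nil : LSubB k [] [] []
| LS_cons : forall vs1 vs2 v v' b b',
    LSubV k vs1 v v' -> LSubB k vs2 b b' ->
    LSubB k (vs1 ++ vs2) (v :: b) (v' :: b')
with LSubV (k : nat) : list rval -> rval -> rval -> Prop :=
| LS_lt : forall j, j < k -> LSubV k [] (RVar j) (RVar j)
| LS_gt : forall j, k < j -> LSubV k [] (RVar j) (RVar (pred j))
| LS_hit : forall v, LSubV k [v] (RVar k) (Nat.iter k (vlift 0) v)
| LS_lam : forall vs t t',
    LSubT (S k) vs t t' -> LSubV k vs (RLam t) (RLam t').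

(* t<x := v1,...,vn> where x is the index-0 variable of t: union over
   all bijections, i.e. all orderings of the list vs. *)
Definition lin_subst (t : rterm) (vs : list rval) : rterm -> Prop :=
  fun u => exists vs', Permutation vs vs' /\ LSubT 0 vs' t u.

(* One-step reduction e -> E (E a finite set of simple terms), closed
   under contexts, with multilinear extension of constructors. *)
Inductive rstep : rterm -> (rterm -> Prop) -> Prop :=
| St_beta : forall t vs,
    rstep (RApp (RBag [RLam t]) (RBag vs)) (lin_subst t vs)
| St_zero : forall b t, length b <> 1 ->
    rstep (RApp (RBag b) t) (fun _ => False)
| St_sigma1 : forall t s1 s2,
    (* [\x.t] s1 s2 -> [\x.t s2] s1 ; s2 goes under the binder *)
    rstep (RApp (RApp (RBag [RLam t]) s1) s2)
          (fun u => u = RApp (RBag [RLam (RApp t (tlift 0 s2))]) s1)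
| St_sigma3 : forall v t s,
    (* [v]([\x.t] s) -> [\x.[v] t] s ; v goes under the binder *)
    rstep (RApp (RBag [v]) (RApp (RBag [RLam t]) s))
          (fun u => u = RApp (RBag [RLam (RApp (RBag [vlift 0 v]) t)]) s)
| St_appL : forall s t S, rstep s S ->
    rstep (RApp s t) (fun u => exists s', S s' /\ u = RApp s' t)
| St_appR : forall s t T, rstep t T ->
    rstep (RApp s t) (fun u => exists t', T t' /\ u = RApp s t')
| St_bag : forall b1 v b2 V, vstep v V ->
    rstep (RBag (b1 ++ v :: b2))
          (fun u => exists v', V v' /\ u = RBag (b1 ++ v' :: b2))
with vstep : rval -> (rval -> Prop) -> Prop :=
| St_lam : forall t T, rstep t T ->
    vstep (RLam t) (fun w => exists t', T t' /\ w = RLam t').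

Definition rnormal (e : rterm) : Prop := ~ exists E, rstep e E.

Definition sstep (E E' : rterm -> Prop) : Prop :=
  exists e E1, E e /\ rstep e E1 /\
    forall u, E' u <-> ((E u /\ u <> e) \/ E1 u).

Inductive sred : (rterm -> Prop) -> (rterm -> Prop) -> Prop :=
| sred_refl : forall E, sred E E
| sred_step : forall E E' E'', sstep E E' -> sred E' E'' -> sred E E''.

(* F is a normal form of e  (by confluence and strong normalisation it is
   the normal form nf(e)) *)
Definition is_nf (e : rterm) (F : rterm -> Prop) : Prop :=
  sred (fun u => u = e) F /\ forall u, F u -> rnormal u.

Definition NF (E : rterm -> Prop) : rterm -> Prop :=
  fun t => exists e F, E e /\ is_nf e F /\ F t.

Fixpoint taylor (M : lterm) : rterm -> Prop :=
  match M with
  | LVar x => fun s => exists n, s = RBag (repeat (RVar x) n)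
  | LLam N => fun s => exists ts, Forall (taylor N) ts /\ s = RBag (map RLam ts)
  | LApp P Q => fun s => exists s1 s2, taylor P s1 /\ taylor Q s2 /\ s = RApp s1 s2
  end.

Inductive req : rterm -> rterm -> Prop :=
| req_app : forall s s' t t', req s s' -> req t t' -> req (RApp s t) (RApp s' t')
| req_bag : forall b b1 b2, Permutation b b1 -> bpw b1 b2 -> req (RBag b) (RBag b2)
with vreq : rval -> rval -> Prop :=
| vreq_var : forall j, vreq (RVar j) (RVar j)
| vreq_lam : forall t t', req t t' -> vreq (RLam t) (RLam t')
with bpw : list rval -> list rval -> Prop :=
| bpw_nil : bpw [] []
| bpw_cons : forall v v' b b', vreq v v' -> bpw b b' -> bpw (v :: b) (v' :: b').

Definition mset_eq (E F : rterm -> Prop) : Prop :=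
  forall t, (exists t', req t t' /\ E t') <-> (exists t', req t t' /\ F t').

(* Main.v *)
Require Import Defs.
From Stdlib Require Import List Permutation Arith Lia Classical.
Import ListNotations.


Fixpoint lsum (l : list nat) : nat := match l with [] => 0 | x :: l' => x + lsum l' end.

Section Ind.
Variables (P : rterm -> Prop) (Q : rval -> Prop).
Hypothesis HApp : forall s t, P s -> P t -> P (RApp s t).
Hypothesis HBag : forall b, Forall Q b -> P (RBag b).
Hypothesis HVar : forall j, Q (RVar j).
Hypothesis HLam : forall t, P t -> Q (RLam t).
Fixpoint tind (t : rterm) : P t :=
  match t with
  | RApp s u => HApp s u (tind s) (tind u)
  | RBag b => HBag b ((fix F (l : list rval) : Forall Q l :=
                        match l with [] => Forall_nil _
                        | v :: l' => Forall_cons _ (vind v) (F l') end) b)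
  end
with vind (v : rval) : Q v :=
  match v with
  | RVar j => HVar j
  | RLam t => HLam t (tind t)
  end.
Lemma tv_ind : (forall t, P t) /\ (forall v, Q v).
Proof. split; [exact tind | exact vind]. Qed.
End Ind.

Scheme LSubT_ind2 := Induction for LSubT Sort Prop
with LSubB_ind2 := Induction for LSubB Sort Prop
with LSubV_ind2 := Induction for LSubV Sort Prop.

Section LM.
Variables (P : nat -> list rval -> rterm -> rterm -> Prop)
  (P0 : nat -> list rval -> list rval -> list rval -> Prop)
  (P1 : nat -> list rval -> rval -> rval -> Prop).
Hypothesis H1 : forall k vs1 vs2 s s' u u', LSubT k vs1 s s' -> P k vs1 s s' ->
  LSubT k vs2 u u' -> P k vs2 u u' -> P k (vs1 ++ vs2) (RApp s u) (RApp s' u').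
Hypothesis H2 : forall k vs b b', LSubB k vs b b' -> P0 k vs b b' -> P k vs (RBag b) (RBag b').
Hypothesis H3 : forall k, P0 k [] [] [].
Hypothesis H4 : forall k vs1 vs2 v v' b b', LSubV k vs1 v v' -> P1 k vs1 v v' ->
  LSubB k vs2 b b' -> P0 k vs2 b b' -> P0 k (vs1 ++ vs2) (v :: b) (v' :: b').
Hypothesis H5 : forall k j, j < k -> P1 k [] (RVar j) (RVar j).
Hypothesis H6 : forall k j, k < j -> P1 k [] (RVar j) (RVar (pred j)).
Hypothesis H7 : forall k v, P1 k [v] (RVar k) (Nat.iter k (vlift 0) v).
Hypothesis H8 : forall k vs t t', LSubT (S k) vs t t' -> P (S k) vs t t' -> P1 k vs (RLam t) (RLam t').
Lemma LSub_mut : (forall k vs t u, LSubT k vs t u -> P k vs t u) /\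
  (forall k vs b b', LSubB k vs b b' -> P0 k vs b b') /\
  (forall k vs v v', LSubV k vs v v' -> P1 k vs v v').
Proof.
  split; [|split]; intros.
  - eapply (LSubT_ind2 (fun k l r r0 _ => P k l r r0) (fun k l b b' _ => P0 k l b b')
                       (fun k l v v' _ => P1 k l v v')); eauto.
  - eapply (LSubB_ind2 (fun k l r r0 _ => P k l r r0) (fun k l b b' _ => P0 k l b b')
                       (fun k l v v' _ => P1 k l v v')); eauto.
  - eapply (LSubV_ind2 (fun k l r r0 _ => P k l r r0) (fun k l b b' _ => P0 k l b b')
                       (fun k l v v' _ => P1 k l v v')); eauto.
Qed.
End LM.

Scheme rstep_ind2 := Induction for rstep Sort Prop
with vstep_ind2 := Induction for vstep Sort Prop.
Combined Scheme step_mut from rstep_ind2, vstep_ind2.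

Ltac lebs := match goal with
  | |- context [Nat.leb ?a ?b] => destruct (Nat.leb_spec a b)
  | |- context [Nat.eqb ?a ?b] => destruct (Nat.eqb_spec a b)
  end.

Lemma lift_lift :
  (forall t c d, c <= d -> tlift (S d) (tlift c t) = tlift c (tlift d t)) /\
  (forall v c d, c <= d -> vlift (S d) (vlift c v) = vlift c (vlift d v)).
Proof.
  apply tv_ind.
  - intros s u IHs IHu c d H. simpl. rewrite IHs, IHu; auto.
  - intros b Hb c d H. simpl. f_equal. rewrite !map_map.
    induction Hb; simpl; auto. rewrite H0, IHHb; auto.
  - intros j c d H. cbn -[Nat.leb]. repeat (lebs; cbn -[Nat.leb]); try lia; auto.
  - intros t IH c d H. simpl. rewrite IH; auto. lia.
Qed.

Definition iterl (n : nat) (v : rval) := Nat.iter n (vlift 0) v.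

Lemma iterl_S n v : iterl (S n) v = vlift 0 (iterl n v).
Proof. reflexivity. Qed.

Lemma vlift_iterl_le : forall n c v, c <= n -> vlift c (iterl n v) = iterl (S n) v.
Proof.
  induction n; intros c v H.
  - assert (c = 0) by lia. subst. reflexivity.
  - destruct c. reflexivity.
    rewrite iterl_S. rewrite (proj2 lift_lift) by lia.
    rewrite IHn by lia. reflexivity.
Qed.

Lemma vlift_iterl_ge : forall n c v, n <= c -> vlift c (iterl n v) = iterl n (vlift (c - n) v).
Proof.
  induction n; intros c v H.
  - simpl. rewrite Nat.sub_0_r. reflexivity.
  - rewrite !iterl_S. destruct c. lia.
    rewrite (proj2 lift_lift) by lia. rewrite IHn by lia. reflexivity.
Qed.

Fixpoint sizeT (t : rterm) : nat :=
  match t with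
  | RApp s u => S (sizeT s + sizeT u)
  | RBag b => S (lsum (map sizeV b))
  end
with sizeV (v : rval) : nat :=
  match v with RVar _ => 1 | RLam t => S (sizeT t) end.

Fixpoint WT (t : rterm) : nat :=
  match t with
  | RApp s u => WT s * WT u
  | RBag b => 2 + lsum (map WV b)
  end
with WV (v : rval) : nat :=
  match v with RVar _ => 2 | RLam t => WT t end.

Lemma W_ge2 : (forall t, 2 <= WT t) /\ (forall v, 2 <= WV v).
Proof.
  apply tv_ind; simpl; intros; try nia.
Qed.

Lemma lift_size_W :
  (forall t c, sizeT (tlift c t) = sizeT t /\ WT (tlift c t) = WT t) /\
  (forall v c, sizeV (vlift c v) = sizeV v /\ WV (vlift c v) = WV v).
Proof.
  apply tv_ind; simpl; intros.
  - destruct (H c), (H0 c). split; congruence.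
  - rewrite !map_map. induction H; simpl; auto. destruct (H c). destruct IHForall.
    split; lia.
  - auto.
  - destruct (H (S c)). split; congruence.
Qed.

Lemma iterl_size_W n v : sizeV (iterl n v) = sizeV v /\ WV (iterl n v) = WV v.
Proof.
  induction n; simpl; auto. destruct IHn as [A B].
  fold (iterl n v). destruct (proj2 lift_size_W (iterl n v) 0). split; congruence.
Qed.

Fixpoint occT (k : nat) (t : rterm) : nat :=
  match t with
  | RApp s u => occT k s + occT k u
  | RBag b => lsum (map (occV k) b)
  end
with occV (k : nat) (v : rval) : nat :=
  match v with
  | RVar j => if Nat.eqb j k then 1 else 0
  | RLam t => occT (S k) t
  end.

Ltac lebs2 := repeat (lebs; cbn -[Nat.leb Nat.eqb]).

Lemma LSub_occ :
  (forall k vs t u, LSubT k vs t u -> length vs = occT k t) /\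
  (forall k vs b b', LSubB k vs b b' -> length vs = lsum (map (occV k) b)) /\
  (forall k vs v v', LSubV k vs v v' -> length vs = occV k v).
Proof.
  apply LSub_mut; intros; cbn -[Nat.eqb]; rewrite ?length_app; try lia; lebs2; lia.


Qed.

Lemma app_inv_len {A} (l1 l2 l1' l2' : list A) :
  l1 ++ l2 = l1' ++ l2' -> length l1 = length l1' -> l1 = l1' /\ l2 = l2'.
Proof.
  revert l1'. induction l1; destruct l1'; simpl; intros; try discriminate; auto.
  injection H; intros. destruct (IHl1 l1' H1); try lia. subst; auto.
Qed.

Lemma LSub_det :
  (forall k vs t u, LSubT k vs t u -> forall u', LSubT k vs t u' -> u = u') /\
  (forall k vs b b', LSubB k vs b b' -> forall b'', LSubB k vs b b'' -> b' = b'') /\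
  (forall k vs v v', LSubV k vs v v' -> forall v'', LSubV k vs v v'' -> v' = v'').
Proof.
  apply LSub_mut.
  - intros k vs1 vs2 s s' u u' Hs IHs Hu IHu x Hx. inversion Hx; subst.
    match goal with H : LSubT _ _ s _ |- _ => pose proof ((proj1 LSub_occ) _ _ _ _ H) end. pose proof ((proj1 LSub_occ) _ _ _ _ Hs).
    destruct (app_inv_len _ _ _ _ H) as [E1 E2]; try lia. subst.
    f_equal; auto.
  - intros k vs b b' Hb IH x Hx. inversion Hx; subst. f_equal; auto.
  - intros k x Hx. inversion Hx; subst; auto. congruence.
  - intros k vs1 vs2 v v' b b' Hv IHv Hb IHb x Hx. inversion Hx; subst.
    match goal with H : LSubV _ _ v _ |- _ => pose proof ((proj2 (proj2 LSub_occ)) _ _ _ _ H) end. pose proof ((proj2 (proj2 LSub_occ)) _ _ _ _ Hv).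
    match goal with E : _ ++ _ = _ ++ _ |- _ => destruct (app_inv_len _ _ _ _ E) as [E1 E2]; try lia end. subst.
    f_equal; auto.
  - intros k j H x Hx. inversion Hx; subst; auto; lia.
  - intros k j H x Hx. inversion Hx; subst; auto; lia.
  - intros k v x Hx. inversion Hx; subst; auto; lia.
  - intros k vs t t' Ht IH x Hx. inversion Hx; subst. f_equal; auto.
Qed.

Lemma firstn_skipn_len {A} (l : list A) n m : length l = n + m ->
  length (firstn n l) = n /\ length (skipn n l) = m.
Proof. intros. rewrite length_firstn, length_skipn. lia. Qed.

Lemma LSub_exist :
  (forall t k vs, length vs = occT k t -> exists u, LSubT k vs t u) /\
  (forall v k vs, length vs = occV k v -> exists v', LSubV k vs v v').
Proof.
  apply tv_ind.
  - intros s u IHs IHu k vs H. simpl in H.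
    destruct (firstn_skipn_len vs (occT k s) (occT k u) H).
    destruct (IHs k _ H0) as [s' Hs]. destruct (IHu k _ H1) as [u' Hu].
    exists (RApp s' u'). rewrite <- (firstn_skipn (occT k s) vs). constructor; auto.
  - intros b Hb k vs H. simpl in H.
    assert (exists b', LSubB k vs b b') as [b' Hb'].
    { revert vs H. induction Hb as [|x l Hx0 Hl0 IHl]; intros vs Hv.
      - simpl in Hv. destruct vs; try discriminate. exists []. constructor.
      - simpl in Hv.
        destruct (firstn_skipn_len vs (occV k x) _ Hv) as [F1 F2].
        destruct (Hx0 k _ F1) as [x' Hx]. destruct (IHl _ F2) as [l' Hl].
        exists (x' :: l'). rewrite <- (firstn_skipn (occV k x) vs). constructor; auto. }
    exists (RBag b'). constructor; auto.
  - intros j k vs H. simpl in H. destruct (Nat.eqb_spec j k).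
    + destruct vs as [|v [|]]; try discriminate. subst. eexists. constructor.
    + destruct vs; try discriminate. destruct (Nat.lt_gt_cases j k) as [[Hl|Hl] _]; try lia.
      * eexists. constructor. auto.
      * eexists. apply LS_gt. auto.
  - intros t IH k vs H. simpl in H. destruct (IH (S k) vs H) as [t' Ht].
    exists (RLam t'). constructor. auto.
Qed.

Lemma lsum_app l1 l2 : lsum (l1 ++ l2) = lsum l1 + lsum l2.
Proof. induction l1; simpl; lia. Qed.

Lemma LSub_size :
  (forall k vs t u, LSubT k vs t u -> sizeT u + length vs = sizeT t + lsum (map sizeV vs)) /\
  (forall k vs b b', LSubB k vs b b' ->
     lsum (map sizeV b') + length vs = lsum (map sizeV b) + lsum (map sizeV vs)) /\
  (forall k vs v v', LSubV k vs v v' -> sizeV v' + length vs = sizeV v + lsum (map sizeV vs)).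
Proof.
  apply LSub_mut; intros; simpl; rewrite ?map_app, ?lsum_app, ?length_app; try lia.
  destruct (iterl_size_W k v). fold (iterl k v). lia.
Qed.

Lemma LSub_lift1 :
  (forall k vs t u, LSubT k vs t u -> forall c, c <= k -> LSubT (S k) vs (tlift c t) (tlift c u)) /\
  (forall k vs b b', LSubB k vs b b' -> forall c, c <= k -> LSubB (S k) vs (map (vlift c) b) (map (vlift c) b')) /\
  (forall k vs v v', LSubV k vs v v' -> forall c, c <= k -> LSubV (S k) vs (vlift c v) (vlift c v')).
Proof.
  apply LSub_mut; intros; cbn -[Nat.leb]; lebs2; try lia; try (constructor; auto; lia).
  all: first [ replace (S (Init.Nat.pred j)) with j by lia; apply LS_gt; lia
        | fold (iterl k v); rewrite vlift_iterl_le by lia; apply LS_hit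
        | constructor; apply H0; lia ].
Qed.

Lemma LSub_lift2 :
  (forall k vs t u, LSubT k vs t u -> forall c, k <= c ->
     LSubT k (map (vlift (c - k)) vs) (tlift (S c) t) (tlift c u)) /\
  (forall k vs b b', LSubB k vs b b' -> forall c, k <= c ->
     LSubB k (map (vlift (c - k)) vs) (map (vlift (S c)) b) (map (vlift c) b')) /\
  (forall k vs v v', LSubV k vs v v' -> forall c, k <= c ->
     LSubV k (map (vlift (c - k)) vs) (vlift (S c) v) (vlift c v')).
Proof.
  apply LSub_mut; intros; cbn -[Nat.leb]; rewrite ?map_app; lebs2; try lia; try (constructor; auto; lia);
  first [ replace (S (Init.Nat.pred j)) with j by lia; apply LS_gt; lia
        | apply LS_gt; lia
        | fold (iterl k v); rewrite vlift_iterl_ge by lia; apply LS_hit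
        | constructor; replace (c - k) with (S c - S k) by lia; apply H0; lia
        ].
Qed.

Lemma occ_lift1 :
  (forall t k c, c <= k -> occT (S k) (tlift c t) = occT k t) /\
  (forall v k c, c <= k -> occV (S k) (vlift c v) = occV k v).
Proof.
  apply tv_ind; intros; cbn -[Nat.eqb Nat.leb].
  - rewrite H, H0; auto.
  - rewrite map_map. induction H; simpl; auto; rewrite H, IHForall; auto.
  - lebs2; lia.
  - apply H. lia.
Qed.

Lemma occ_lift2 :
  (forall t k c, k <= c -> occT k (tlift (S c) t) = occT k t) /\
  (forall v k c, k <= c -> occV k (vlift (S c) v) = occV k v).
Proof.
  apply tv_ind; intros; cbn -[Nat.eqb Nat.leb].
  - rewrite H, H0; auto.
  - rewrite map_map. induction H; simpl; auto; rewrite H, IHForall; auto.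
  - lebs2; lia.
  - apply H. lia.
Qed.

Lemma LSub_noocc :
  (forall t k, LSubT k [] (tlift k t) t) /\ (forall v k, LSubV k [] (vlift k v) v).
Proof.
  apply tv_ind; intros; simpl.
  - change (@nil rval) with (@nil rval ++ []). constructor; auto.
  - constructor. induction H; simpl. constructor.
    change (@nil rval) with (@nil rval ++ []). constructor; auto.
  - lebs2.
    + replace j with (pred (S j)) at 2 by lia. apply LS_gt. lia.
    + constructor; auto.
  - constructor. auto.
Qed.

Lemma iterl_sub : forall n k B w0 w, LSubV k B w0 w -> LSubV (n + k) B (iterl n w0) (iterl n w).
Proof.
  induction n; intros; simpl; auto.
  apply (proj2 (proj2 LSub_lift1)). apply IHn; auto. lia.
Qed.


Section SM.
Variables (P : rterm -> (rterm -> Prop) -> Prop) (P0 : rval -> (rval -> Prop) -> Prop).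
Hypothesis S1 : forall t vs, P (RApp (RBag [RLam t]) (RBag vs)) (lin_subst t vs).
Hypothesis S2 : forall b t, length b <> 1 -> P (RApp (RBag b) t) (fun _ => False).
Hypothesis S3 : forall t s1 s2, P (RApp (RApp (RBag [RLam t]) s1) s2)
          (fun u => u = RApp (RBag [RLam (RApp t (tlift 0 s2))]) s1).
Hypothesis S4 : forall v t s, P (RApp (RBag [v]) (RApp (RBag [RLam t]) s))
          (fun u => u = RApp (RBag [RLam (RApp (RBag [vlift 0 v]) t)]) s).
Hypothesis S5 : forall s t S, rstep s S -> P s S ->
    P (RApp s t) (fun u => exists s', S s' /\ u = RApp s' t).
Hypothesis S6 : forall s t T, rstep t T -> P t T ->
    P (RApp s t) (fun u => exists t', T t' /\ u = RApp s t').
Hypothesis S7 : forall b1 v b2 V, vstep v V -> P0 v V ->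
    P (RBag (b1 ++ v :: b2)) (fun u => exists v', V v' /\ u = RBag (b1 ++ v' :: b2)).
Hypothesis S8 : forall t T, rstep t T -> P t T ->
    P0 (RLam t) (fun w => exists t', T t' /\ w = RLam t').
Lemma step_ind' : (forall e E, rstep e E -> P e E) /\ (forall v V, vstep v V -> P0 v V).
Proof.
  apply (step_mut (fun e E _ => P e E) (fun v V _ => P0 v V)); auto.
Qed.
End SM.

Definition ltm (a b : rterm) := sizeT a < sizeT b \/ (sizeT a = sizeT b /\ WT a < WT b).
Definition ltmV (a b : rval) := sizeV a < sizeV b \/ (sizeV a = sizeV b /\ WV a < WV b).

Lemma ltm_wf : well_founded ltm.
Proof.
  assert (forall n w a, sizeT a < n \/ (sizeT a = n /\ WT a < w) -> Acc ltm a).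
  { intro n. pattern n. apply (well_founded_induction lt_wf). clear n. intros n IHn.
    intro w. pattern w. apply (well_founded_induction lt_wf). clear w. intros w IHw.
    intros a Ha. constructor. intros y Hy. unfold ltm in Hy.
    destruct Ha as [Ha|[Ha1 Ha2]].
    - apply (IHn (sizeT a) Ha (S (WT y)) y). lia.
    - subst n. destruct Hy as [Hy|[Hy1 Hy2]].
      + apply (IHn (sizeT y) ltac:(lia) (S (WT y))). lia.
      + apply (IHw (WT a)); auto. }
  intro a. apply (H (S (sizeT a)) 0). lia.
Qed.

Lemma ltm_trans a b c : ltm a b -> ltm b c -> ltm a c.
Proof. unfold ltm; lia. Qed.

Lemma lsum_perm (f : rval -> nat) l l' : Permutation l l' -> lsum (map f l) = lsum (map f l').
Proof. induction 1; simpl; lia. Qed.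

Lemma lsum_app_map (f : rval -> nat) l1 l2 : lsum (map f (l1 ++ l2)) = lsum (map f l1) + lsum (map f l2).
Proof. rewrite map_app. apply lsum_app. Qed.

Lemma step_dec : (forall e E, rstep e E -> forall y, E y -> ltm y e) /\
                 (forall v V, vstep v V -> forall w, V w -> ltmV w v).
Proof.
  pose proof W_ge2 as [Wt Wv].
  apply step_ind'; unfold ltm, ltmV; intros.
  - destruct H as [W [HP HL]].
    pose proof ((proj1 LSub_size) _ _ _ _ HL).
    rewrite <- (lsum_perm sizeV _ _ HP) in H. apply Permutation_length in HP.
    left. simpl. lia.
  - contradiction.
  - subst y. right. simpl.
    destruct (proj1 lift_size_W s2 0). split. lia.
    pose proof (Wt t). pose proof (Wt s1). pose proof (Wt s2). nia.
  - subst y. right. simpl.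
    destruct (proj2 lift_size_W v 0). split. lia.
    pose proof (Wt t). pose proof (Wt s). pose proof (Wv v). nia.
  - destruct H1 as [s' [Hs ->]]. specialize (H0 _ Hs). simpl. pose proof (Wt t). nia.
  - destruct H1 as [t' [Ht ->]]. specialize (H0 _ Ht). simpl. pose proof (Wt s). nia.
  - destruct H1 as [v' [Hv ->]]. specialize (H0 _ Hv). simpl.
    rewrite !lsum_app_map. simpl. lia.
  - destruct H1 as [t' [Ht ->]]. specialize (H0 _ Ht). simpl. lia.
Qed.

Definition seteq {A} (X Y : A -> Prop) := forall y, X y <-> Y y.

Lemma lift1_inv k vs t c y : c <= k -> LSubT (S k) vs (tlift c t) y ->
  exists u, y = tlift c u /\ LSubT k vs t u.
Proof.
  intros Hc H. pose proof ((proj1 LSub_occ) _ _ _ _ H).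
  rewrite (proj1 occ_lift1) in H0 by auto.
  destruct ((proj1 LSub_exist) t k vs H0) as [u Hu]. exists u. split; auto.
  eapply (proj1 LSub_det). apply H. apply (proj1 LSub_lift1); auto.
Qed.

Lemma vlift1_inv k vs t c y : c <= k -> LSubV (S k) vs (vlift c t) y ->
  exists u, y = vlift c u /\ LSubV k vs t u.
Proof.
  intros Hc H. pose proof ((proj2 (proj2 LSub_occ)) _ _ _ _ H).
  rewrite (proj2 occ_lift1) in H0 by auto.
  destruct ((proj2 LSub_exist) t k vs H0) as [u Hu]. exists u. split; auto.
  eapply (proj2 (proj2 LSub_det)). apply H. apply (proj2 (proj2 LSub_lift1)); auto.
Qed.

Lemma lift2_inv k vs t c y : k <= c -> LSubT k (map (vlift (c - k)) vs) (tlift (S c) t) y ->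
  exists u, y = tlift c u /\ LSubT k vs t u.
Proof.
  intros Hc H. pose proof ((proj1 LSub_occ) _ _ _ _ H).
  rewrite (proj1 occ_lift2) in H0 by auto. rewrite length_map in H0.
  destruct ((proj1 LSub_exist) t k vs H0) as [u Hu]. exists u. split; auto.
  eapply (proj1 LSub_det). apply H. apply (proj1 LSub_lift2); auto.
Qed.

Lemma lift_step :
  (forall t T, rstep t T -> forall c, exists X, rstep (tlift c t) X /\
      seteq X (fun y => exists t', T t' /\ y = tlift c t')) /\
  (forall v V, vstep v V -> forall c, exists X, vstep (vlift c v) X /\
      seteq X (fun y => exists v', V v' /\ y = vlift c v')).
Proof.
  apply step_ind'; intros; simpl.
  - eexists. split. apply St_beta. intro y. split.
    + intros [W [HP HL]]. apply Permutation_sym in HP.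
      destruct (Permutation_map_inv _ _ HP) as [W' [-> HP']].
      replace c with (c - 0) in HL at 1 by lia.
      destruct (lift2_inv 0 W' t c y ltac:(lia) HL) as [u [-> Hu]].
      exists u. split; auto. exists W'. split; auto.
    + intros [t' [[W [HP HL]] ->]]. exists (map (vlift c) W). split.
      apply Permutation_map; auto.
      pose proof ((proj1 LSub_lift2) _ _ _ _ HL c ltac:(lia)). rewrite Nat.sub_0_r in H. auto.
  - eexists. split. apply St_zero. rewrite length_map. auto.
    intro y. split. intros []. intros [? [[] _]].
  - eexists. split. apply St_sigma1. intro y. split.
    + intros ->. eexists. split. reflexivity. simpl.
      rewrite (proj1 lift_lift) by lia. reflexivity.
    + intros [t' [-> ->]]. simpl. rewrite (proj1 lift_lift) by lia. reflexivity.
  - eexists. split. apply St_sigma3. intro y. split.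
    + intros ->. eexists. split. reflexivity. simpl.
      rewrite (proj2 lift_lift) by lia. reflexivity.
    + intros [t' [-> ->]]. simpl. rewrite (proj2 lift_lift) by lia. reflexivity.
  - destruct (H0 c) as [X [HX EX]]. eexists. split. apply St_appL. apply HX.
    intro y. split.
    + intros [s' [Hs ->]]. apply EX in Hs. destruct Hs as [s0 [Hs0 ->]].
      exists (RApp s0 t). split; eauto.
    + intros [t' [[s' [Hs ->]] ->]]. exists (tlift c s'). split; auto. apply EX. eauto.
  - destruct (H0 c) as [X [HX EX]]. eexists. split. apply St_appR. apply HX.
    intro y. split.
    + intros [s' [Hs ->]]. apply EX in Hs. destruct Hs as [s0 [Hs0 ->]].
      exists (RApp s s0). split; eauto.
    + intros [t' [[s' [Hs ->]] ->]]. exists (tlift c s'). split; auto. apply EX. eauto.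
  - destruct (H0 c) as [X [HX EX]]. rewrite map_app. simpl.
    eexists. split. apply St_bag. apply HX.
    intro y. split.
    + intros [s' [Hs ->]]. apply EX in Hs. destruct Hs as [s0 [Hs0 ->]].
      exists (RBag (b1 ++ s0 :: b2)). split; eauto. simpl. rewrite map_app. reflexivity.
    + intros [t' [[s' [Hs ->]] ->]]. exists (vlift c s'). split. apply EX; eauto.
      simpl. rewrite map_app. reflexivity.
  - destruct (H0 (S c)) as [X [HX EX]]. eexists. split. apply St_lam. apply HX.
    intro y. split.
    + intros [s' [Hs ->]]. apply EX in Hs. destruct Hs as [s0 [Hs0 ->]].
      exists (RLam s0). split; eauto.
    + intros [t' [[s' [Hs ->]] ->]]. exists (tlift (S c) s'). split; auto. apply EX. eauto.
Qed.

Lemma iterl_step : forall n v V, vstep v V -> exists X, vstep (iterl n v) X /\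
      seteq X (fun y => exists v', V v' /\ y = iterl n v').
Proof.
  induction n; intros v V H.
  - exists V. split; auto. intro y; simpl; split; eauto. intros [? [? ->]]; auto.
  - destruct (IHn v V H) as [X [HX EX]].
    destruct ((proj2 lift_step) _ _ HX 0) as [Y [HY EY]].
    exists Y. split; auto. intro y. rewrite (EY y). split.
    + intros [w [Hw ->]]. apply EX in Hw. destruct Hw as [v' [Hv' ->]]. eauto.
    + intros [v' [Hv' ->]]. exists (iterl n v'). split; auto. apply EX. eauto.
Qed.


Lemma LSubT_app_inv k vs s r u : LSubT k vs (RApp s r) u ->
  exists vs1 vs2 s' r', vs = vs1 ++ vs2 /\ u = RApp s' r' /\ LSubT k vs1 s s' /\ LSubT k vs2 r r'.
Proof. intro H. inversion H; subst. do 4 eexists; eauto. Qed.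

Lemma LSubT_bag_inv k vs b u : LSubT k vs (RBag b) u -> exists b', u = RBag b' /\ LSubB k vs b b'.
Proof. intro H. inversion H; subst. eauto. Qed.

Lemma LSubB_nil_inv k vs c : LSubB k vs [] c -> vs = [] /\ c = [].
Proof. intro H. inversion H; subst; auto. Qed.

Lemma LSubB_cons_inv k vs v b c : LSubB k vs (v :: b) c ->
  exists vs1 vs2 v' b', vs = vs1 ++ vs2 /\ c = v' :: b' /\ LSubV k vs1 v v' /\ LSubB k vs2 b b'.
Proof. intro H. inversion H; subst. do 4 eexists; eauto. Qed.

Lemma LSubB_nil_tinv k vs c : LSubB k vs c [] -> vs = [] /\ c = [].
Proof. intro H. inversion H; subst; auto. Qed.

Lemma LSubB_cons_tinv k vs v b c : LSubB k vs c (v :: b) ->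
  exists vs1 vs2 v0 b0, vs = vs1 ++ vs2 /\ c = v0 :: b0 /\ LSubV k vs1 v0 v /\ LSubB k vs2 b0 b.
Proof. intro H. inversion H; subst. do 4 eexists; eauto. Qed.

Lemma LSubV_lam_inv k vs t y : LSubV k vs (RLam t) y -> exists t', y = RLam t' /\ LSubT (S k) vs t t'.
Proof. intro H. inversion H; subst. eauto. Qed.

Lemma LSubV_var_inv k vs j y : LSubV k vs (RVar j) y ->
  (j < k /\ vs = [] /\ y = RVar j) \/ (k < j /\ vs = [] /\ y = RVar (pred j)) \/
  (j = k /\ exists w, vs = [w] /\ y = iterl k w).
Proof. intro H. inversion H; subst; eauto 10. Qed.

Lemma LSubB_app k B1 B2 b1 b2 c1 c2 : LSubB k B1 b1 c1 -> LSubB k B2 b2 c2 ->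
  LSubB k (B1 ++ B2) (b1 ++ b2) (c1 ++ c2).
Proof.
  intro H. revert B2 b2 c2. induction H; intros; simpl; auto.
  rewrite <- app_assoc. constructor; auto.
Qed.

Lemma LSubB_app_inv k B b1 b2 c : LSubB k B (b1 ++ b2) c ->
  exists B1 B2 c1 c2, B = B1 ++ B2 /\ c = c1 ++ c2 /\ LSubB k B1 b1 c1 /\ LSubB k B2 b2 c2.
Proof.
  revert B c. induction b1; intros B c H; simpl in H.
  - exists [], B, [], c. repeat split; auto. constructor.
  - apply LSubB_cons_inv in H. destruct H as [vs1 [vs2 [v' [b' [-> [-> [Hv Hb]]]]]]].
    destruct (IHb1 _ _ Hb) as [B1 [B2 [c1 [c2 [-> [-> [H1 H2]]]]]]].
    exists (vs1 ++ B1), B2, (v' :: c1), c2. rewrite app_assoc. repeat split; auto.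
    constructor; auto.
Qed.

Lemma LSubB_app_tinv k B b c1 c2 : LSubB k B b (c1 ++ c2) ->
  exists B1 B2 b1 b2, B = B1 ++ B2 /\ b = b1 ++ b2 /\ LSubB k B1 b1 c1 /\ LSubB k B2 b2 c2.
Proof.
  revert B b. induction c1; intros B b H; simpl in H.
  - exists [], B, [], b. repeat split; auto. constructor.
  - apply LSubB_cons_tinv in H. destruct H as [vs1 [vs2 [v' [b' [-> [-> [Hv Hb]]]]]]].
    destruct (IHc1 _ _ Hb) as [B1 [B2 [c3 [c4 [-> [-> [H1 H2]]]]]]].
    exists (vs1 ++ B1), B2, (v' :: c3), c4. rewrite app_assoc. repeat split; auto.
    constructor; auto.
Qed.

Lemma LSubB_length k B b c : LSubB k B b c -> length b = length c.
Proof. induction 1; simpl; auto. Qed.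

Lemma LSubB_single k B v c : LSubB k B [v] c -> exists v', c = [v'] /\ LSubV k B v v'.
Proof.
  intro H. apply LSubB_cons_inv in H. destruct H as [vs1 [vs2 [v' [b' [-> [-> [Hv Hb]]]]]]].
  apply LSubB_nil_inv in Hb. destruct Hb; subst. rewrite app_nil_r. eauto.
Qed.

Lemma LSubB_single_t k B v c : LSubB k B c [v] -> exists v0, c = [v0] /\ LSubV k B v0 v.
Proof.
  intro H. apply LSubB_cons_tinv in H. destruct H as [vs1 [vs2 [v' [b' [-> [-> [Hv Hb]]]]]]].
  apply LSubB_nil_tinv in Hb. destruct Hb; subst. rewrite app_nil_r. eauto.
Qed.

Lemma LSubB_single_c k B v v' : LSubV k B v v' -> LSubB k B [v] [v'].
Proof. intro H. rewrite <- (app_nil_r B). constructor; auto. constructor. Qed.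

Lemma perm_mid {A} (a1 b1 a2 b2 : list A) :
  Permutation ((a1 ++ b1) ++ (a2 ++ b2)) ((a1 ++ a2) ++ (b1 ++ b2)).
Proof.
  rewrite <- !app_assoc. apply Permutation_app_head.
  rewrite !app_assoc. apply Permutation_app_tail. apply Permutation_app_comm.
Qed.

Lemma permB_src k B W0 W : LSubB k B W0 W -> forall W0', Permutation W0 W0' ->
  exists B' W', Permutation B B' /\ Permutation W W' /\ LSubB k B' W0' W'.
Proof.
  intros H W0' HP. revert B W H. induction HP; intros B W H.
  - apply LSubB_nil_inv in H. destruct H; subst. exists [], []. repeat constructor.
  - apply LSubB_cons_inv in H. destruct H as [vs1 [vs2 [v' [b' [-> [-> [Hv Hb]]]]]]].
    destruct (IHHP _ _ Hb) as [B' [W' [P1 [P2 H]]]].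
    exists (vs1 ++ B'), (v' :: W'). repeat split.
    apply Permutation_app_head; auto. constructor; auto. constructor; auto.
  - apply LSubB_cons_inv in H. destruct H as [vs1 [vs2 [v' [b' [-> [-> [Hv Hb]]]]]]].
    apply LSubB_cons_inv in Hb. destruct Hb as [vs3 [vs4 [v'' [b'' [-> [-> [Hv' Hb]]]]]]].
    exists (vs3 ++ vs1 ++ vs4), (v'' :: v' :: b''). repeat split.
    apply Permutation_app_swap_app. constructor.
    constructor; auto. constructor; auto.
  - destruct (IHHP1 _ _ H) as [B1 [W1 [P1 [P2 H1]]]].
    destruct (IHHP2 _ _ H1) as [B2 [W2 [P3 [P4 H2]]]].
    exists B2, W2. repeat split; eauto using Permutation_trans.
Qed.

Lemma permB_tgt k B W0 W : LSubB k B W0 W -> forall W', Permutation W W' ->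
  exists B' W0', Permutation B B' /\ Permutation W0 W0' /\ LSubB k B' W0' W'.
Proof.
  intros H W' HP. revert B W0 H. induction HP; intros B W0 H.
  - apply LSubB_nil_tinv in H. destruct H; subst. exists [], []. repeat constructor.
  - apply LSubB_cons_tinv in H. destruct H as [vs1 [vs2 [v' [b' [-> [-> [Hv Hb]]]]]]].
    destruct (IHHP _ _ Hb) as [B' [W1 [P1 [P2 H]]]].
    exists (vs1 ++ B'), (v' :: W1). repeat split.
    apply Permutation_app_head; auto. constructor; auto. constructor; auto.
  - apply LSubB_cons_tinv in H. destruct H as [vs1 [vs2 [v' [b' [-> [-> [Hv Hb]]]]]]].
    apply LSubB_cons_tinv in Hb. destruct Hb as [vs3 [vs4 [v'' [b'' [-> [-> [Hv' Hb]]]]]]].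
    exists (vs3 ++ vs1 ++ vs4), (v'' :: v' :: b''). repeat split.
    apply Permutation_app_swap_app. constructor.
    constructor; auto. constructor; auto.
  - destruct (IHHP1 _ _ H) as [B1 [W1 [P1 [P2 H1]]]].
    destruct (IHHP2 _ _ H1) as [B2 [W2 [P3 [P4 H2]]]].
    exists B2, W2. repeat split; eauto using Permutation_trans.
Qed.

Lemma occ_iterl : forall n k w, occV (n + k) (iterl n w) = occV k w.
Proof.
  induction n; intros; simpl; auto. fold (iterl n w).
  rewrite (proj2 occ_lift1) by lia. auto.
Qed.

Lemma iterl_sub_inv : forall n k L w0 y, LSubV (n + k) L (iterl n w0) y ->
  exists w, y = iterl n w /\ LSubV k L w0 w.
Proof.
  induction n; intros; simpl in *; eauto.
  fold (iterl n w0) in H.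
  destruct (vlift1_inv (n + k) L (iterl n w0) 0 y ltac:(lia) H) as [u [-> Hu]].
  destruct (IHn _ _ _ _ Hu) as [w [-> Hw]]. exists w. split; auto.
Qed.

Lemma iterl_noocc : forall i k a y W, LSubV i W (iterl (i + S k) a) y ->
  W = [] /\ y = iterl (i + k) a.
Proof.
  intros. replace (i + S k) with (S (i + k)) in H by lia.
  rewrite <- (vlift_iterl_le (i + k) i a) in H by lia.
  pose proof ((proj2 LSub_noocc) (iterl (i + k) a) i).
  pose proof ((proj2 (proj2 LSub_occ)) _ _ _ _ H).
  pose proof ((proj2 (proj2 LSub_occ)) _ _ _ _ H0). simpl in H2.
  destruct W; simpl in H1; try lia. split; auto.
  eapply (proj2 (proj2 LSub_det)); eauto.
Qed.


Lemma core_fwd :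
  (forall k' A a a', LSubT k' A a a' -> forall i k, k' = i + S k -> forall W y, LSubT i W a' y ->
     forall B W0, LSubB k B W0 W -> exists z L, LSubT i W0 a z /\ Permutation L (A ++ B) /\ LSubT (i + k) L z y) /\
  (forall k' A a a', LSubB k' A a a' -> forall i k, k' = i + S k -> forall W y, LSubB i W a' y ->
     forall B W0, LSubB k B W0 W -> exists z L, LSubB i W0 a z /\ Permutation L (A ++ B) /\ LSubB (i + k) L z y) /\
  (forall k' A a a', LSubV k' A a a' -> forall i k, k' = i + S k -> forall W y, LSubV i W a' y ->
     forall B W0, LSubB k B W0 W -> exists z L, LSubV i W0 a z /\ Permutation L (A ++ B) /\ LSubV (i + k) L z y).
Proof.
  apply LSub_mut.
  - intros k' A1 A2 s s' r r' _ IH1 _ IH2 i k -> W y Hy B W0 HB.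
    apply LSubT_app_inv in Hy. destruct Hy as [W1 [W2 [y1 [y2 [-> [-> [Hy1 Hy2]]]]]]].
    apply LSubB_app_tinv in HB. destruct HB as [B1 [B2 [W01 [W02 [-> [-> [HB1 HB2]]]]]]].
    destruct (IH1 i k eq_refl _ _ Hy1 _ _ HB1) as [z1 [L1 [Hz1 [P1 Hl1]]]].
    destruct (IH2 i k eq_refl _ _ Hy2 _ _ HB2) as [z2 [L2 [Hz2 [P2 Hl2]]]].
    exists (RApp z1 z2), (L1 ++ L2). repeat split; try constructor; auto.
    eapply Permutation_trans. apply Permutation_app; eauto. apply perm_mid.
  - intros k' A b b' _ IH i k -> W y Hy B W0 HB.
    apply LSubT_bag_inv in Hy. destruct Hy as [y' [-> Hy]].
    destruct (IH i k eq_refl _ _ Hy _ _ HB) as [z [L [Hz [P Hl]]]].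
    exists (RBag z), L. repeat split; try constructor; auto.
  - intros k' i k -> W y Hy B W0 HB.
    apply LSubB_nil_inv in Hy. destruct Hy; subst.
    apply LSubB_nil_tinv in HB. destruct HB; subst.
    exists [], []. repeat constructor.
  - intros k' A1 A2 v v' b b' _ IH1 _ IH2 i k -> W y Hy B W0 HB.
    apply LSubB_cons_inv in Hy. destruct Hy as [W1 [W2 [y1 [y2 [-> [-> [Hy1 Hy2]]]]]]].
    apply LSubB_app_tinv in HB. destruct HB as [B1 [B2 [W01 [W02 [-> [-> [HB1 HB2]]]]]]].
    destruct (IH1 i k eq_refl _ _ Hy1 _ _ HB1) as [z1 [L1 [Hz1 [P1 Hl1]]]].
    destruct (IH2 i k eq_refl _ _ Hy2 _ _ HB2) as [z2 [L2 [Hz2 [P2 Hl2]]]].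
    exists (z1 :: z2), (L1 ++ L2). repeat split; try constructor; auto.
    eapply Permutation_trans. apply Permutation_app; eauto. apply perm_mid.
  - intros k' j Hj i k -> W y Hy B W0 HB.
    apply LSubV_var_inv in Hy. destruct Hy as [[H1 [-> ->]]|[[H1 [-> ->]]|[-> [w [-> ->]]]]].
    + apply LSubB_nil_tinv in HB. destruct HB; subst.
      exists (RVar j), []. repeat split; try constructor; auto. lia.
    + apply LSubB_nil_tinv in HB. destruct HB; subst.
      exists (RVar (pred j)), []. repeat split; try constructor; auto; lia.
    + apply LSubB_single_t in HB. destruct HB as [w0 [-> Hw]].
      exists (iterl i w0), B. repeat split. apply LS_hit. apply Permutation_refl.
      apply iterl_sub. auto.
  - intros k' j Hj i k -> W y Hy B W0 HB.
    apply LSubV_var_inv in Hy. destruct Hy as [[H1 [-> ->]]|[[H1 [-> ->]]|[H1 [w [-> ->]]]]]; try lia.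
    apply LSubB_nil_tinv in HB. destruct HB; subst.
    exists (RVar (pred j)), []. repeat split; try constructor; auto; try lia.
  - intros k' a i k -> W y Hy B W0 HB. fold (iterl (i + S k) a) in Hy.
    apply iterl_noocc in Hy. destruct Hy as [-> ->].
    apply LSubB_nil_tinv in HB. destruct HB; subst.
    exists (RVar (i + k)), [a]. repeat split.
    + replace (RVar (i + k)) with (RVar (pred (i + S k))) by (f_equal; lia). apply LS_gt. lia.
    + simpl. apply Permutation_refl.
    + apply LS_hit.
  - intros k' A t t' _ IH i k -> W y Hy B W0 HB.
    apply LSubV_lam_inv in Hy. destruct Hy as [y' [-> Hy]].
    destruct (IH (S i) k eq_refl _ _ Hy _ _ HB) as [z [L [Hz [P Hl]]]].
    exists (RLam z), L. repeat split; try constructor; auto.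
Qed.

Lemma core_bwd :
  (forall i W0 a z, LSubT i W0 a z -> forall k L y, LSubT (i + k) L z y ->
     exists A B W a', Permutation L (A ++ B) /\ LSubT (i + S k) A a a' /\ LSubB k B W0 W /\ LSubT i W a' y) /\
  (forall i W0 a z, LSubB i W0 a z -> forall k L y, LSubB (i + k) L z y ->
     exists A B W a', Permutation L (A ++ B) /\ LSubB (i + S k) A a a' /\ LSubB k B W0 W /\ LSubB i W a' y) /\
  (forall i W0 a z, LSubV i W0 a z -> forall k L y, LSubV (i + k) L z y ->
     exists A B W a', Permutation L (A ++ B) /\ LSubV (i + S k) A a a' /\ LSubB k B W0 W /\ LSubV i W a' y).
Proof.
  apply LSub_mut.
  - intros i W01 W02 s s' r r' _ IH1 _ IH2 k L y Hy.
    apply LSubT_app_inv in Hy. destruct Hy as [L1 [L2 [y1 [y2 [-> [-> [Hy1 Hy2]]]]]]].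
    destruct (IH1 _ _ _ Hy1) as [A1 [B1 [W1 [a1 [P1 [Ha1 [HB1 Hw1]]]]]]].
    destruct (IH2 _ _ _ Hy2) as [A2 [B2 [W2 [a2 [P2 [Ha2 [HB2 Hw2]]]]]]].
    exists (A1 ++ A2), (B1 ++ B2), (W1 ++ W2), (RApp a1 a2). repeat split.
    + eapply Permutation_trans. apply Permutation_app; eauto. apply perm_mid.
    + constructor; auto.
    + apply LSubB_app; auto.
    + constructor; auto.
  - intros i W0 b b' _ IH k L y Hy.
    apply LSubT_bag_inv in Hy. destruct Hy as [y' [-> Hy]].
    destruct (IH _ _ _ Hy) as [A [B [W [a [P [Ha [HB Hw]]]]]]].
    exists A, B, W, (RBag a). repeat split; try constructor; auto.
  - intros i k L y Hy. apply LSubB_nil_inv in Hy. destruct Hy; subst.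
    exists [], [], [], []. repeat constructor.
  - intros i W01 W02 v v' b b' _ IH1 _ IH2 k L y Hy.
    apply LSubB_cons_inv in Hy. destruct Hy as [L1 [L2 [y1 [y2 [-> [-> [Hy1 Hy2]]]]]]].
    destruct (IH1 _ _ _ Hy1) as [A1 [B1 [W1 [a1 [P1 [Ha1 [HB1 Hw1]]]]]]].
    destruct (IH2 _ _ _ Hy2) as [A2 [B2 [W2 [a2 [P2 [Ha2 [HB2 Hw2]]]]]]].
    exists (A1 ++ A2), (B1 ++ B2), (W1 ++ W2), (a1 :: a2). repeat split.
    + eapply Permutation_trans. apply Permutation_app; eauto. apply perm_mid.
    + constructor; auto.
    + apply LSubB_app; auto.
    + constructor; auto.
  - intros i j Hj k L y Hy.
    apply LSubV_var_inv in Hy. destruct Hy as [[H1 [-> ->]]|[[H1 [-> ->]]|[H1 [w [-> ->]]]]]; try lia.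
    exists [], [], [], (RVar j). repeat split; try constructor; lia.
  - intros i j Hj k L y Hy.
    apply LSubV_var_inv in Hy. destruct Hy as [[H1 [-> ->]]|[[H1 [-> ->]]|[H1 [w [-> ->]]]]].
    + exists [], [], [], (RVar j). repeat split; try constructor; try lia; try (apply LS_gt; lia).
    + exists [], [], [], (RVar (pred j)). repeat split; try constructor; try lia; try (apply LS_gt; lia).
    + exists [w], [], [], (iterl (i + S k) w). repeat split.
      * simpl. apply Permutation_refl.
      * replace (i + S k) with j by lia. apply LS_hit.
      * constructor.
      *
        replace (i + S k) with (S (i + k)) by lia.
        rewrite <- (vlift_iterl_le (i + k) i w) by lia. apply (proj2 LSub_noocc).
  - intros i w0 k L y Hy. fold (iterl i w0) in Hy.
    destruct (iterl_sub_inv i k L w0 y Hy) as [w [-> Hw]].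
    exists [], L, [w], (RVar i). repeat split.
    + apply Permutation_refl.
    + constructor. lia.
    + apply LSubB_single_c. auto.
    + apply LS_hit.
  - intros i W0 t t' _ IH k L y Hy.
    apply LSubV_lam_inv in Hy. destruct Hy as [y' [-> Hy]].
    destruct (IH k L y' Hy) as [A [B [W [a [P [Ha [HB Hw]]]]]]].
    exists A, B, W, (RLam a). repeat split; try constructor; auto.
Qed.


Lemma beta_sub_inv k vs a ws u : LSubT k vs (RApp (RBag [RLam a]) (RBag ws)) u ->
  exists A B a' ws', vs = A ++ B /\ u = RApp (RBag [RLam a']) (RBag ws') /\
     LSubT (S k) A a a' /\ LSubB k B ws ws'.
Proof.
  intro H. apply LSubT_app_inv in H. destruct H as [X [Y [x [y [-> [-> [Hx Hy]]]]]]].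
  apply LSubT_bag_inv in Hx. destruct Hx as [x' [-> Hx]].
  apply LSubB_single in Hx. destruct Hx as [v' [-> Hv]].
  apply LSubV_lam_inv in Hv. destruct Hv as [a' [-> Ha]].
  apply LSubT_bag_inv in Hy. destruct Hy as [y' [-> Hy]].
  exists X, Y, a', y'. auto.
Qed.

Lemma beta_sub k A B a a' ws ws' : LSubT (S k) A a a' -> LSubB k B ws ws' ->
  LSubT k (A ++ B) (RApp (RBag [RLam a]) (RBag ws)) (RApp (RBag [RLam a']) (RBag ws')).
Proof.
  intros. constructor; constructor; auto. apply LSubB_single_c. constructor. auto.
Qed.

Lemma lam_bag_inv k vs a y : LSubT k vs (RBag [RLam a]) y ->
  exists a', y = RBag [RLam a'] /\ LSubT (S k) vs a a'.
Proof.
  intro Hx. apply LSubT_bag_inv in Hx. destruct Hx as [x' [-> Hx]].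
  apply LSubB_single in Hx. destruct Hx as [v' [-> Hv]].
  apply LSubV_lam_inv in Hv. destruct Hv as [a' [-> Ha]]. eauto.
Qed.

Lemma lam_bag_sub k vs a a' : LSubT (S k) vs a a' -> LSubT k vs (RBag [RLam a]) (RBag [RLam a']).
Proof. intros. constructor. apply LSubB_single_c. constructor. auto. Qed.

Lemma single_bag_inv k vs v y : LSubT k vs (RBag [v]) y ->
  exists v', y = RBag [v'] /\ LSubV k vs v v'.
Proof.
  intro Hx. apply LSubT_bag_inv in Hx. destruct Hx as [x' [-> Hx]].
  apply LSubB_single in Hx. destruct Hx as [v' [-> Hv]]. eauto.
Qed.

Lemma single_bag_sub k vs v v' : LSubV k vs v v' -> LSubT k vs (RBag [v]) (RBag [v']).
Proof. intros. constructor. apply LSubB_single_c. auto. Qed.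

Lemma perm_swap3 {A} (a b c : list A) : Permutation ((a ++ b) ++ c) ((a ++ c) ++ b).
Proof. rewrite <- !app_assoc. apply Permutation_app_head. apply Permutation_app_comm. Qed.

Lemma substep_fwd :
  (forall t T, rstep t T -> forall k vs u, LSubT k vs t u -> exists U, rstep u U /\
     forall y, U y -> exists t' vs', T t' /\ Permutation vs vs' /\ LSubT k vs' t' y) /\
  (forall v V, vstep v V -> forall k vs u, LSubV k vs v u -> exists U, vstep u U /\
     forall y, U y -> exists v' vs', V v' /\ Permutation vs vs' /\ LSubV k vs' v' y).
Proof.
  apply step_ind'.
  - intros a ws k vs u Hu. apply beta_sub_inv in Hu.
    destruct Hu as [A [B [a' [ws' [-> [-> [Ha Hw]]]]]]].
    eexists. split. apply St_beta. intros y [W [HP HL]].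
    destruct (permB_tgt _ _ _ _ Hw _ HP) as [B' [W0 [P1 [P2 HB]]]].
    destruct ((proj1 core_fwd) _ _ _ _ Ha 0 k eq_refl _ _ HL _ _ HB) as [z [L [Hz [PL HzL]]]].
    exists z, L. repeat split.
    + exists W0. auto.
    + eapply Permutation_trans. 2: apply Permutation_sym; eauto.
      apply Permutation_app_head. auto.
    + auto.
  - intros b t Hb k vs u Hu. apply LSubT_app_inv in Hu.
    destruct Hu as [X [Y [x [y [-> [-> [Hx Hy]]]]]]].
    apply LSubT_bag_inv in Hx. destruct Hx as [b' [-> Hx]].
    exists (fun _ => False). split. apply St_zero. apply LSubB_length in Hx. congruence.
    intros _ [].
  - intros a s1 s2 k vs u Hu. apply LSubT_app_inv in Hu.
    destruct Hu as [X [V2 [x [s2' [-> [-> [Hx H2]]]]]]].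
    apply LSubT_app_inv in Hx. destruct Hx as [VA [V1 [x0 [s1' [-> [-> [Hx0 H1]]]]]]].
    apply lam_bag_inv in Hx0. destruct Hx0 as [a' [-> Ha]].
    eexists. split. apply St_sigma1. intros y ->.
    eexists. exists ((VA ++ V2) ++ V1). repeat split.
    + apply perm_swap3.
    + constructor; auto. apply lam_bag_sub. constructor; auto.
      apply (proj1 LSub_lift1); auto. lia.
  - intros v a s k vs u Hu. apply LSubT_app_inv in Hu.
    destruct Hu as [X [Z [x [z [-> [-> [Hx Hz]]]]]]].
    apply single_bag_inv in Hx. destruct Hx as [v' [-> Hv]].
    apply LSubT_app_inv in Hz. destruct Hz as [Y [V3 [x [s' [-> [-> [Hx H3]]]]]]].
    apply lam_bag_inv in Hx. destruct Hx as [a' [-> Ha]].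
    eexists. split. apply St_sigma3. intros y ->.
    eexists. exists ((X ++ Y) ++ V3). repeat split.
    + rewrite app_assoc. apply Permutation_refl.
    + constructor; auto. apply lam_bag_sub. constructor; auto.
      apply single_bag_sub. apply (proj2 (proj2 LSub_lift1)); auto. lia.
  - intros s r S _ IH k vs u Hu. apply LSubT_app_inv in Hu.
    destruct Hu as [V1 [V2 [s' [r' [-> [-> [Hs Hr]]]]]]].
    destruct (IH _ _ _ Hs) as [U [HU EU]].
    eexists. split. apply St_appL. apply HU. intros y [x [Hx ->]].
    destruct (EU _ Hx) as [s0 [V1' [HS [P HL]]]].
    exists (RApp s0 r), (V1' ++ V2). repeat split; eauto.
    apply Permutation_app_tail; auto. constructor; auto.
  - intros s r S _ IH k vs u Hu. apply LSubT_app_inv in Hu.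
    destruct Hu as [V1 [V2 [s' [r' [-> [-> [Hs Hr]]]]]]].
    destruct (IH _ _ _ Hr) as [U [HU EU]].
    eexists. split. apply St_appR. apply HU. intros y [x [Hx ->]].
    destruct (EU _ Hx) as [s0 [V2' [HS [P HL]]]].
    exists (RApp s s0), (V1 ++ V2'). repeat split; eauto.
    apply Permutation_app_head; auto. constructor; auto.
  - intros b1 v b2 V _ IH k vs u Hu.
    apply LSubT_bag_inv in Hu. destruct Hu as [c [-> Hc]].
    apply LSubB_app_inv in Hc. destruct Hc as [B1 [B2 [c1 [c2 [-> [-> [H1 H2]]]]]]].
    apply LSubB_cons_inv in H2. destruct H2 as [Bv [Bb [w [c3 [-> [-> [Hv Hb]]]]]]].
    destruct (IH _ _ _ Hv) as [U [HU EU]].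
    eexists. split. apply St_bag. apply HU. intros y [x [Hx ->]].
    destruct (EU _ Hx) as [v0 [Bv' [HV [P HL]]]].
    exists (RBag (b1 ++ v0 :: b2)), (B1 ++ Bv' ++ Bb). repeat split; eauto.
    apply Permutation_app_head. apply Permutation_app_tail. auto.
    constructor. apply LSubB_app; auto. constructor; auto.
  - intros t T _ IH k vs u Hu. apply LSubV_lam_inv in Hu. destruct Hu as [t' [-> Ht]].
    destruct (IH _ _ _ Ht) as [U [HU EU]].
    eexists. split. apply St_lam. apply HU. intros y [x [Hx ->]].
    destruct (EU _ Hx) as [t0 [vs' [HT [P HL]]]].
    exists (RLam t0), vs'. repeat split; eauto. constructor; auto.
Qed.

Lemma substep_bwd :
  (forall t T, rstep t T -> forall k t' vs' y, T t' -> LSubT k vs' t' y ->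
     exists vs u U, Permutation vs' vs /\ LSubT k vs t u /\ rstep u U /\ U y) /\
  (forall v V, vstep v V -> forall k v' vs' y, V v' -> LSubV k vs' v' y ->
     exists vs u U, Permutation vs' vs /\ LSubV k vs v u /\ vstep u U /\ U y).
Proof.
  apply step_ind'.
  - intros a ws k t' vs' y [W0 [HP HL]] Hy.
    destruct ((proj1 core_bwd) _ _ _ _ HL k vs' y Hy) as [A [B [W [a' [P1 [Ha [HB Hw]]]]]]].
    destruct (permB_src _ _ _ _ HB ws (Permutation_sym HP)) as [B' [W' [P2 [P3 HB']]]].
    exists (A ++ B'), (RApp (RBag [RLam a']) (RBag W')). eexists. repeat split.
    + eapply Permutation_trans. apply P1. apply Permutation_app_head. auto.
    + apply beta_sub; auto.
    + apply St_beta.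
    + exists W. split; auto. apply Permutation_sym; auto.
  - intros b t Hb k t' vs' y [].
  - intros a s1 s2 k t' vs' y -> Hy. apply LSubT_app_inv in Hy.
    destruct Hy as [X [V1 [x [s1' [-> [-> [Hx H1]]]]]]].
    apply lam_bag_inv in Hx. destruct Hx as [z [-> Hz]].
    apply LSubT_app_inv in Hz. destruct Hz as [VA [V2 [a' [q [-> [-> [Ha Hq]]]]]]].
    destruct (lift1_inv k V2 s2 0 q ltac:(lia) Hq) as [s2' [-> H2]].
    exists ((VA ++ V1) ++ V2), (RApp (RApp (RBag [RLam a']) s1') s2'). eexists. repeat split.
    + apply perm_swap3.
    + constructor; auto. constructor; auto. apply lam_bag_sub; auto.
    + apply St_sigma1.
    + reflexivity.
  - intros v a s k t' vs' y -> Hy. apply LSubT_app_inv in Hy.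
    destruct Hy as [X [V3 [x [s' [-> [-> [Hx H3]]]]]]].
    apply lam_bag_inv in Hx. destruct Hx as [z [-> Hz]].
    apply LSubT_app_inv in Hz. destruct Hz as [VV [VA [x [a' [-> [-> [Hx Ha]]]]]]].
    apply single_bag_inv in Hx. destruct Hx as [w [-> Hw]].
    destruct (vlift1_inv k VV v 0 w ltac:(lia) Hw) as [v' [-> Hv]].
    exists (VV ++ VA ++ V3), (RApp (RBag [v']) (RApp (RBag [RLam a']) s')). eexists. repeat split.
    + rewrite app_assoc. apply Permutation_refl.
    + constructor. apply single_bag_sub; auto. constructor; auto. apply lam_bag_sub; auto.
    + apply St_sigma3.
    + reflexivity.
  - intros s r S _ IH k t' vs' y [s0 [HS ->]] Hy. apply LSubT_app_inv in Hy.
    destruct Hy as [V1 [V2 [y1 [y2 [-> [-> [H1 H2]]]]]]].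
    destruct (IH _ _ _ _ HS H1) as [V1' [u [U [P [Hu [HU Uy]]]]]].
    exists (V1' ++ V2), (RApp u y2). eexists. repeat split.
    + apply Permutation_app_tail; auto.
    + constructor; auto.
    + apply St_appL. apply HU.
    + simpl. eauto.
  - intros s r S _ IH k t' vs' y [s0 [HS ->]] Hy. apply LSubT_app_inv in Hy.
    destruct Hy as [V1 [V2 [y1 [y2 [-> [-> [H1 H2]]]]]]].
    destruct (IH _ _ _ _ HS H2) as [V2' [u [U [P [Hu [HU Uy]]]]]].
    exists (V1 ++ V2'), (RApp y1 u). eexists. repeat split.
    + apply Permutation_app_head; auto.
    + constructor; auto.
    + apply St_appR. apply HU.
    + simpl. eauto.
  - intros b1 v b2 V _ IH k t' vs' y [v0 [HV ->]] Hy.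
    apply LSubT_bag_inv in Hy. destruct Hy as [c [-> Hc]].
    apply LSubB_app_inv in Hc. destruct Hc as [B1 [B2 [c1 [c2 [-> [-> [H1 H2]]]]]]].
    apply LSubB_cons_inv in H2. destruct H2 as [Bv [Bb [w [c3 [-> [-> [Hv Hb]]]]]]].
    destruct (IH _ _ _ _ HV Hv) as [Bv' [u [U [P [Hu [HU Uy]]]]]].
    exists (B1 ++ Bv' ++ Bb), (RBag (c1 ++ u :: c3)). eexists. repeat split.
    + apply Permutation_app_head. apply Permutation_app_tail. auto.
    + constructor. apply LSubB_app; auto. constructor; auto.
    + apply St_bag. apply HU.
    + simpl. eauto.
  - intros t T _ IH k v' vs' y [t0 [HT ->]] Hy.
    apply LSubV_lam_inv in Hy. destruct Hy as [y' [-> Hy]].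
    destruct (IH _ _ _ _ HT Hy) as [vs [u [U [P [Hu [HU Uy]]]]]].
    exists vs, (RLam u), (fun w => exists t', U t' /\ w = RLam t'). split; [|split; [|split]]; auto.
    + constructor; auto.
    + apply St_lam. apply HU.
    + simpl. eauto.
Qed.


Lemma app_split_cons {A} (l1 l2 a b : list A) x : l1 ++ l2 = a ++ x :: b ->
  (exists m, l1 = a ++ x :: m /\ b = m ++ l2) \/ (exists n, l2 = n ++ x :: b /\ a = l1 ++ n).
Proof.
  revert a. induction l1; intros a0 H; simpl in H.
  - right. exists a0. auto.
  - destruct a0 as [|y a0]; simpl in H; injection H; intros.
    + subst. left. exists l1. auto.
    + subst. destruct (IHl1 _ H0) as [[m [-> ->]]|[n [-> ->]]].
      * left. exists m. auto.
      * right. exists n. auto.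
Qed.

Lemma len_cons_eq {A} (a : list A) x y m : length (a ++ x :: m) = length (a ++ y :: m).
Proof. rewrite !length_app. reflexivity. Qed.

Definition VSP k vs t u := forall vsa v vsb, vs = vsa ++ v :: vsb -> forall V, vstep v V ->
  exists U, rstep u U /\ (forall y, U y -> exists v', V v' /\ LSubT k (vsa ++ v' :: vsb) t y) /\
    (forall v' y, V v' -> LSubT k (vsa ++ v' :: vsb) t y -> U y).
Definition VSP0 k vs b c := forall vsa v vsb, vs = vsa ++ v :: vsb -> forall V, vstep v V ->
  forall pre post, exists U, rstep (RBag (pre ++ c ++ post)) U /\
    (forall y, U y -> exists v' c', V v' /\ y = RBag (pre ++ c' ++ post) /\ LSubB k (vsa ++ v' :: vsb) b c') /\
    (forall v' c', V v' -> LSubB k (vsa ++ v' :: vsb) b c' -> U (RBag (pre ++ c' ++ post))).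
Definition VSP1 k vs a w := forall vsa v vsb, vs = vsa ++ v :: vsb -> forall V, vstep v V ->
  exists U, vstep w U /\ (forall y, U y -> exists v', V v' /\ LSubV k (vsa ++ v' :: vsb) a y) /\
    (forall v' y, V v' -> LSubV k (vsa ++ v' :: vsb) a y -> U y).

Lemma valstep : (forall k vs t u, LSubT k vs t u -> VSP k vs t u) /\
  (forall k vs b c, LSubB k vs b c -> VSP0 k vs b c) /\
  (forall k vs a w, LSubV k vs a w -> VSP1 k vs a w).
Proof.
  apply LSub_mut; unfold VSP, VSP0, VSP1.
  - intros k vs1 vs2 s s' r r' Hs IH1 Hr IH2 vsa v vsb E V HV.
    destruct (app_split_cons _ _ _ _ _ E) as [[m [-> ->]]|[n [-> ->]]].
    + destruct (IH1 vsa v m eq_refl V HV) as [U [HU [F1 F2]]].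
      eexists. split. apply St_appL. apply HU. split.
      * intros y [x [Hx ->]]. destruct (F1 _ Hx) as [v' [HV' Hl]]. exists v'. split; auto.
        replace (vsa ++ v' :: m ++ vs2) with ((vsa ++ v' :: m) ++ vs2) by (rewrite <- app_assoc; auto).
        constructor; auto.
      * intros v' y HV' Hy. replace (vsa ++ v' :: m ++ vs2) with ((vsa ++ v' :: m) ++ vs2) in Hy
          by (rewrite <- app_assoc; auto).
        apply LSubT_app_inv in Hy. destruct Hy as [X1 [X2 [y1 [y2 [EE [-> [H1 H2]]]]]]].
        pose proof ((proj1 LSub_occ) _ _ _ _ H1). pose proof ((proj1 LSub_occ) _ _ _ _ Hs).
        pose proof (len_cons_eq vsa v v' m).
                destruct (app_inv_len _ _ _ _ EE) as [<- <-]; try lia.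
        rewrite ((proj1 LSub_det) _ _ _ _ H2 _ Hr).
        exists y1. split; eauto.
    + destruct (IH2 n v vsb eq_refl V HV) as [U [HU [F1 F2]]].
      eexists. split. apply St_appR. apply HU. split.
      * intros y [x [Hx ->]]. destruct (F1 _ Hx) as [v' [HV' Hl]]. exists v'. split; auto.
        rewrite <- app_assoc. constructor; auto.
      * intros v' y HV' Hy. rewrite <- app_assoc in Hy.
        apply LSubT_app_inv in Hy. destruct Hy as [X1 [X2 [y1 [y2 [EE [-> [H1 H2]]]]]]].
        pose proof ((proj1 LSub_occ) _ _ _ _ H1). pose proof ((proj1 LSub_occ) _ _ _ _ Hs).
        destruct (app_inv_len _ _ _ _ EE) as [<- <-]; try lia.
        rewrite ((proj1 LSub_det) _ _ _ _ H1 _ Hs).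
        exists y2. split; eauto.
  - intros k vs b c Hb IH vsa v vsb E V HV.
    destruct (IH vsa v vsb E V HV [] []) as [U [HU [F1 F2]]].
    rewrite app_nil_r in HU. simpl in HU.
    exists U. split; auto. split.
    + intros y Uy. destruct (F1 _ Uy) as [v' [c' [HV' [-> Hl]]]]. exists v'. split; auto.
      rewrite app_nil_r. constructor. auto.
    + intros v' y HV' Hy. apply LSubT_bag_inv in Hy. destruct Hy as [c' [-> Hc']].
      specialize (F2 _ _ HV' Hc'). rewrite app_nil_r in F2. auto.
  - intros k vsa v vsb E. destruct vsa; discriminate.
  - intros k vs1 vs2 a a' b b' Ha IH1 Hb IH2 vsa v vsb E V HV pre post.
    destruct (app_split_cons _ _ _ _ _ E) as [[m [-> ->]]|[n [-> ->]]].
    + destruct (IH1 vsa v m eq_refl V HV) as [U [HU [F1 F2]]].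
      eexists. split. simpl. apply St_bag. apply HU. split.
      * intros y [x [Hx ->]]. destruct (F1 _ Hx) as [v' [HV' Hl]]. exists v', (x :: b'). repeat split; auto.
        replace (vsa ++ v' :: m ++ vs2) with ((vsa ++ v' :: m) ++ vs2) by (rewrite <- app_assoc; auto).
        constructor; auto.
      * intros v' y HV' Hy. replace (vsa ++ v' :: m ++ vs2) with ((vsa ++ v' :: m) ++ vs2) in Hy
          by (rewrite <- app_assoc; auto).
        apply LSubB_cons_inv in Hy. destruct Hy as [X1 [X2 [y1 [y2 [EE [-> [H1 H2]]]]]]].
        pose proof ((proj2 (proj2 LSub_occ)) _ _ _ _ H1). pose proof ((proj2 (proj2 LSub_occ)) _ _ _ _ Ha).
        pose proof (len_cons_eq vsa v v' m).
        destruct (app_inv_len _ _ _ _ EE) as [<- <-]; try lia.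
        rewrite ((proj1 (proj2 LSub_det)) _ _ _ _ H2 _ Hb).
        exists y1. split; eauto.
    + destruct (IH2 n v vsb eq_refl V HV (pre ++ [a']) post) as [U [HU [F1 F2]]].
      rewrite <- app_assoc in HU. simpl in HU.
      exists U. split. apply HU. split.
      * intros y Uy. destruct (F1 _ Uy) as [v' [c' [HV' [-> Hl]]]]. exists v', (a' :: c'). repeat split; auto.
        rewrite <- app_assoc. auto.
        rewrite <- app_assoc. constructor; auto.
      * intros v' y HV' Hy. rewrite <- app_assoc in Hy.
        apply LSubB_cons_inv in Hy. destruct Hy as [X1 [X2 [y1 [y2 [EE [-> [H1 H2]]]]]]].
        pose proof ((proj2 (proj2 LSub_occ)) _ _ _ _ H1). pose proof ((proj2 (proj2 LSub_occ)) _ _ _ _ Ha).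
        destruct (app_inv_len _ _ _ _ EE) as [<- <-]; try lia.
        rewrite ((proj2 (proj2 LSub_det)) _ _ _ _ H1 _ Ha).
        specialize (F2 _ _ HV' H2). rewrite <- app_assoc in F2. exact F2.
  - intros k j Hj vsa v vsb E. destruct vsa; discriminate.
  - intros k j Hj vsa v vsb E. destruct vsa; discriminate.
  - intros k w vsa v vsb E V HV.
    destruct vsa as [|x vsa]; simpl in E; [|destruct vsa; discriminate].
    injection E; intros; subst.
    destruct (iterl_step k v V HV) as [X [HX EX]].
    exists X. split. exact HX. split.
    + intros y Xy. apply EX in Xy. destruct Xy as [v' [HV' ->]]. exists v'. split; auto. apply LS_hit.
    + intros v' y HV' Hy. apply EX. apply LSubV_var_inv in Hy.
      destruct Hy as [[H1 _]|[[H1 _]|[_ [w [E1 ->]]]]]; try lia.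
      injection E1; intros; subst. eauto.
  - intros k vs t t' Ht IH vsa v vsb E V HV.
    destruct (IH vsa v vsb E V HV) as [U [HU [F1 F2]]].
    eexists. split. apply St_lam. apply HU. split.
    + intros y [x [Hx ->]]. destruct (F1 _ Hx) as [v' [HV' Hl]]. exists v'. split; auto. constructor; auto.
    + intros v' y HV' Hy. apply LSubV_lam_inv in Hy. destruct Hy as [y' [-> Hy]].
      exists y'. split; eauto.
Qed.


Inductive NfR : rterm -> rterm -> Prop :=
| NfR_nf : forall e, rnormal e -> NfR e e
| NfR_step : forall e E y u, rstep e E -> E y -> NfR y u -> NfR e u.

Definition nfs (X : rterm -> Prop) u := exists x, X x /\ NfR x u.
Definition UNI e := forall E, rstep e E -> forall u, NfR e u -> nfs E u.

Inductive reach : rterm -> rterm -> Prop :=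
| reach_refl : forall x, reach x x
| reach_step : forall x X y z, rstep x X -> X y -> reach z y -> reach z x.

Definition leq_m a b := a = b \/ ltm a b.

Lemma reach_leq : forall z x, reach z x -> leq_m z x.
Proof.
  induction 1. left; auto.
  right. pose proof ((proj1 step_dec) _ _ H _ H0).
  destruct IHreach as [->|]; auto. eapply ltm_trans; eauto.
Qed.

Lemma leq_ltm a b c : leq_m a b -> ltm b c -> ltm a c.
Proof. intros [->|H] H'; auto. eapply ltm_trans; eauto. Qed.

Lemma step_nfs y Y : UNI y -> rstep y Y -> forall u, NfR y u <-> nfs Y u.
Proof.
  intros HU HY u. split. intro; eapply HU; eauto.
  intros [x [Hx Hn]]. eapply NfR_step; eauto.
Qed.

Lemma step1_nfs y Y y' : UNI y -> rstep y Y -> seteq Y (fun z => z = y') ->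
  forall u, NfR y u <-> NfR y' u.
Proof.
  intros HU HY E u. rewrite (step_nfs y Y HU HY u). split.
  - intros [x [Hx Hn]]. apply E in Hx. subst. auto.
  - intros H. exists y'. split; auto. apply E. auto.
Qed.

Lemma nfs_ext X Y : seteq X Y -> forall u, nfs X u <-> nfs Y u.
Proof. intros E u. unfold nfs. split; intros [x [Hx Hn]]; exists x; split; auto; apply E; auto. Qed.

Lemma nfs_single x u : nfs (fun z => z = x) u <-> NfR x u.
Proof. split. intros [? [-> H]]; auto. intro; exists x; auto. Qed.

Lemma nfs_cover (Z G : rterm -> Prop) :
  (forall z, Z z -> UNI z /\ exists U, rstep z U /\ forall g, U g -> G g) ->
  (forall g, G g -> exists z U, Z z /\ rstep z U /\ U g) ->
  forall u, nfs Z u <-> nfs G u.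
Proof.
  intros H1 H2 u. split.
  - intros [z [Hz Hn]]. destruct (H1 _ Hz) as [HU [U [HS HG]]].
    destruct (HU _ HS _ Hn) as [g [Hg Hgn]]. exists g. auto.
  - intros [g [Hg Hn]]. destruct (H2 _ Hg) as [z [U [Hz [HS HUg]]]].
    exists z. split; auto. eapply NfR_step; eauto.
Qed.

Lemma NfR_normal e u : rnormal e -> NfR e u -> u = e.
Proof. intros Hn H. destruct H; auto. exfalso. apply Hn. eauto. Qed.

Section Ctx.
Variable C : rterm -> rterm.
Hypothesis HC : forall x X, rstep x X ->
  exists Y, rstep (C x) Y /\ seteq Y (fun y => exists x', X x' /\ y = C x').

Lemma ctx_reach : forall z x, reach z x -> reach (C z) (C x).
Proof.
  induction 1. constructor.
  destruct (HC _ _ H) as [Y [HY EY]]. eapply reach_step. apply HY. apply EY. eauto. auto.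
Qed.

Lemma ctx_back : forall x x'', NfR x x'' -> forall u, NfR (C x'') u -> NfR (C x) u.
Proof.
  induction 1; intros; auto.
  destruct (HC _ _ H) as [Y [HY EY]]. eapply NfR_step. apply HY. apply EY. eauto. auto.
Qed.

Lemma ctx_fwd : forall x, (forall x', reach x' x -> UNI (C x')) ->
  forall u, NfR (C x) u -> exists x'', NfR x x'' /\ NfR (C x'') u.
Proof.
  intro x. induction x as [x IH] using (well_founded_induction ltm_wf).
  intros HU u Hu.
  destruct (classic (exists X, rstep x X)) as [[X HX]|Hn].
  - destruct (HC _ _ HX) as [Y [HY EY]].
    destruct (HU x (reach_refl _) _ HY _ Hu) as [y [Hy Hyn]].
    apply EY in Hy. destruct Hy as [x' [Hx' ->]].
    destruct (IH x' ((proj1 step_dec) _ _ HX _ Hx')) with (u := u) as [x'' [H1 H2]]; auto.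
    + intros x1 Hr. apply HU. eapply reach_step; eauto.
    + exists x''. split; auto. eapply NfR_step; eauto.
  - exists x. split; auto. constructor. auto.
Qed.

Lemma ctx_iff : forall x, (forall x', reach x' x -> UNI (C x')) ->
  forall u, NfR (C x) u <-> exists x'', NfR x x'' /\ NfR (C x'') u.
Proof.
  intros. split. apply ctx_fwd; auto. intros [x'' [H1 H2]]. eapply ctx_back; eauto.
Qed.
End Ctx.

Lemma ctx_appL t : forall x X, rstep x X ->
  exists Y, rstep (RApp x t) Y /\ seteq Y (fun y => exists x', X x' /\ y = RApp x' t).
Proof. intros. eexists. split. apply St_appL; eauto. intro; tauto. Qed.

Lemma ctx_appR s : forall x X, rstep x X ->
  exists Y, rstep (RApp s x) Y /\ seteq Y (fun y => exists x', X x' /\ y = RApp s x').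
Proof. intros. eexists. split. apply St_appR; eauto. intro; tauto. Qed.

Lemma ctx_lam b1 b2 : forall x X, rstep x X ->
  exists Y, rstep (RBag (b1 ++ RLam x :: b2)) Y /\
     seteq Y (fun y => exists x', X x' /\ y = RBag (b1 ++ RLam x' :: b2)).
Proof.
  intros. eexists. split. apply St_bag. apply St_lam. eauto.
  intro y. split.
  - intros [v' [[t' [Ht ->]] ->]]. eauto.
  - intros [x' [Hx ->]]. eauto.
Qed.

Lemma ctx_comp (C1 C2 : rterm -> rterm) :
  (forall x X, rstep x X -> exists Y, rstep (C1 x) Y /\ seteq Y (fun y => exists x', X x' /\ y = C1 x')) ->
  (forall x X, rstep x X -> exists Y, rstep (C2 x) Y /\ seteq Y (fun y => exists x', X x' /\ y = C2 x')) ->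
  (forall x X, rstep x X -> exists Y, rstep (C1 (C2 x)) Y /\ seteq Y (fun y => exists x', X x' /\ y = C1 (C2 x'))).
Proof.
  intros H1 H2 x X HX. destruct (H2 _ _ HX) as [Y2 [HY2 E2]].
  destruct (H1 _ _ HY2) as [Y1 [HY1 E1]]. exists Y1. split; auto.
  intro y. rewrite (E1 y). split.
  - intros [x' [Hx' ->]]. apply E2 in Hx'. destruct Hx' as [x'' [H ->]]. eauto.
  - intros [x' [Hx' ->]]. exists (C2 x'). split; auto. apply E2. eauto.
Qed.

Lemma ltm_appL s t : ltm s (RApp s t).
Proof. left. simpl. lia. Qed.
Lemma ltm_appR s t : ltm t (RApp s t).
Proof. left. simpl. lia. Qed.
Lemma ltm_lam b1 t b2 : ltm t (RBag (b1 ++ RLam t :: b2)).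
Proof. left. simpl. rewrite lsum_app_map. simpl. lia. Qed.


Definition IHe e := forall y, ltm y e -> UNI y.

Lemma single_split {A} (b1 b2 : list A) v0 v : b1 ++ v0 :: b2 = [v] -> b1 = [] /\ b2 = [] /\ v0 = v.
Proof.
  destruct b1 as [|x [|y b1]]; simpl; intro H; injection H; intros; subst; auto.
  - destruct b2; discriminate. - discriminate.
Qed.

Lemma inv_bag_single v S : rstep (RBag [v]) S ->
  exists V, vstep v V /\ S = (fun u => exists v', V v' /\ u = RBag [v']).
Proof.
  intro H. inversion H; subst.
  match goal with E : _ ++ _ :: _ = _ |- _ => apply single_split in E; destruct E as [-> [-> ->]] end.
  eauto.
Qed.

Lemma inv_vlam a V : vstep (RLam a) V -> exists T, rstep a T /\ V = (fun w => exists t', T t' /\ w = RLam t').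
Proof. intro H. inversion H; subst. eauto. Qed.

Lemma inv_bag b S : rstep (RBag b) S -> exists b1 v b2 V, b = b1 ++ v :: b2 /\ vstep v V /\
  S = (fun u => exists v', V v' /\ u = RBag (b1 ++ v' :: b2)).
Proof. intro H. inversion H; subst. eauto 10. Qed.

Lemma IHe_step e E y : IHe e -> rstep e E -> E y -> UNI y.
Proof. intros. apply H. eapply (proj1 step_dec); eauto. Qed.

Lemma P_beta_appL a ws S : IHe (RApp (RBag [RLam a]) (RBag ws)) -> rstep (RBag [RLam a]) S ->
  forall u, nfs (lin_subst a ws) u <-> nfs (fun y => exists s', S s' /\ y = RApp s' (RBag ws)) u.
Proof.
  intros IH HS0 u. pose proof HS0 as HS.
  apply inv_bag_single in HS. destruct HS as [V [HV ->]].
  apply inv_vlam in HV. destruct HV as [T [HT ->]].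
  apply iff_trans with (nfs (fun g => exists t', T t' /\ lin_subst t' ws g) u).
  - apply nfs_cover.
    + intros z Hz. split. { eapply IHe_step. exact IH. apply St_beta. exact Hz. }
      destruct Hz as [W [HP HL]].
      destruct ((proj1 substep_fwd) _ _ HT 0 W z HL) as [U [HU EU]]. exists U. split; auto.
      intros g Ug. destruct (EU _ Ug) as [t' [W' [HT' [P HL']]]]. exists t'. split; auto.
      exists W'. split; eauto using Permutation_trans.
    + intros g [t' [HT' [W' [HP' HL']]]].
      destruct ((proj1 substep_bwd) _ _ HT 0 t' W' g HT' HL') as [vs [z [U [P [Hz [HU Ug]]]]]].
      exists z, U. repeat split; auto. exists vs. split; eauto using Permutation_trans.
  - apply iff_sym. apply nfs_cover.
    + intros z Hz. split. { eapply IHe_step. exact IH. apply St_appL. exact HS0. exact Hz. }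
      destruct Hz as [s' [[v' [[t' [HT' ->]] ->]] ->]].
      exists (lin_subst t' ws). split. apply St_beta. intros g Hg. eauto.
    + intros g [t' [HT' Hg]]. exists (RApp (RBag [RLam t']) (RBag ws)), (lin_subst t' ws).
      repeat split; auto. 2: apply St_beta. exists (RBag [RLam t']). split; auto. eauto.
Qed.

Lemma perm_elt_inv (l1 l2 W : list rval) v : Permutation (l1 ++ v :: l2) W ->
  exists c1 c2, W = c1 ++ v :: c2 /\ Permutation (l1 ++ l2) (c1 ++ c2).
Proof.
  intro H. assert (In v W). { eapply Permutation_in. apply H. apply in_elt. }
  apply in_split in H0. destruct H0 as [c1 [c2 ->]]. exists c1, c2. split; auto.
  eapply Permutation_app_inv. apply H.
Qed.

Lemma P_beta_appR a ws S : IHe (RApp (RBag [RLam a]) (RBag ws)) -> rstep (RBag ws) S ->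
  forall u, nfs (lin_subst a ws) u <-> nfs (fun y => exists s', S s' /\ y = RApp (RBag [RLam a]) s') u.
Proof.
  intros IH HS0 u. pose proof HS0 as HS.
  apply inv_bag in HS. destruct HS as [b1 [v [b2 [V [-> [HV ->]]]]]].
  apply iff_trans with (nfs (fun g => exists v', V v' /\ lin_subst a (b1 ++ v' :: b2) g) u).
  - apply nfs_cover.
    + intros z Hz. split. { eapply IHe_step. exact IH. apply St_beta. exact Hz. }
      destruct Hz as [W [HP HL]].
      destruct (perm_elt_inv _ _ _ _ HP) as [c1 [c2 [-> HP2]]].
      destruct ((proj1 valstep) _ _ _ _ HL c1 v c2 eq_refl V HV) as [U [HU [F1 F2]]].
      exists U. split; auto.
      intros g Ug. destruct (F1 _ Ug) as [v' [HV' HL']]. exists v'. split; auto.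
      exists (c1 ++ v' :: c2). split; auto. apply Permutation_elt. auto.
    + intros g [v' [HV' [W' [HP' HL']]]].
      destruct (perm_elt_inv _ _ _ _ HP') as [c1 [c2 [-> HP2]]].
      assert (exists z, LSubT 0 (c1 ++ v :: c2) a z) as [z Hz].
      { apply (proj1 LSub_exist). rewrite <- ((proj1 LSub_occ) _ _ _ _ HL').
        rewrite !length_app. reflexivity. }
      destruct ((proj1 valstep) _ _ _ _ Hz c1 v c2 eq_refl V HV) as [U [HU [F1 F2]]].
      exists z, U. repeat split; eauto.
      exists (c1 ++ v :: c2). split; auto. apply Permutation_elt. auto.
  - apply iff_sym. apply nfs_cover.
    + intros z Hz. split. { eapply IHe_step. exact IH. apply St_appR. exact HS0. exact Hz. }
      destruct Hz as [s' [[v' [HV' ->]] ->]].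
      exists (lin_subst a (b1 ++ v' :: b2)). split. apply St_beta. intros g Hg. eauto.
    + intros g [v' [HV' Hg]]. exists (RApp (RBag [RLam a]) (RBag (b1 ++ v' :: b2))), (lin_subst a (b1 ++ v' :: b2)).
      repeat split; auto. 2: apply St_beta. eauto.
Qed.

Lemma P_zero_appL b t S : IHe (RApp (RBag b) t) -> length b <> 1 -> rstep (RBag b) S ->
  forall u, nfs (fun _ => False) u <-> nfs (fun y => exists s', S s' /\ y = RApp s' t) u.
Proof.
  intros IH Hb HS0 u. pose proof HS0 as HS.
  apply inv_bag in HS. destruct HS as [b1 [v [b2 [V [-> [HV ->]]]]]].
  apply iff_sym. apply nfs_cover.
  - intros z Hz. split. { eapply IHe_step. exact IH. apply St_appL. exact HS0. exact Hz. }
    destruct Hz as [s' [[v' [HV' ->]] ->]]. exists (fun _ => False). split; auto.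
    apply St_zero. rewrite length_app in *. simpl in *. auto.
  - intros g [].
Qed.

Lemma P_zero_appR b t T : IHe (RApp (RBag b) t) -> length b <> 1 -> rstep t T ->
  forall u, nfs (fun _ => False) u <-> nfs (fun y => exists t', T t' /\ y = RApp (RBag b) t') u.
Proof.
  intros IH Hb HT u.
  apply iff_sym. apply nfs_cover.
  - intros z Hz. split. { eapply IHe_step. exact IH. apply St_appR. exact HT. exact Hz. }
    destruct Hz as [s' [HT' ->]]. exists (fun _ => False). split; auto. apply St_zero. auto.
  - intros g [].
Qed.

Lemma noocc_inv k W s y : LSubT k W (tlift k s) y -> W = [] /\ y = s.
Proof.
  intro H. pose proof ((proj1 LSub_noocc) s k).
  pose proof ((proj1 LSub_occ) _ _ _ _ H). pose proof ((proj1 LSub_occ) _ _ _ _ H0).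
  destruct W; simpl in *; try lia. split; auto. eapply (proj1 LSub_det); eauto.
Qed.

Lemma vnoocc_inv k W s y : LSubV k W (vlift k s) y -> W = [] /\ y = s.
Proof.
  intro H. pose proof ((proj2 LSub_noocc) s k).
  pose proof ((proj2 (proj2 LSub_occ)) _ _ _ _ H). pose proof ((proj2 (proj2 LSub_occ)) _ _ _ _ H0).
  destruct W; simpl in *; try lia. split; auto. eapply (proj2 (proj2 LSub_det)); eauto.
Qed.

Lemma lin_app_lift a s2 ws : seteq (lin_subst (RApp a (tlift 0 s2)) ws)
  (fun y => exists s', lin_subst a ws s' /\ y = RApp s' s2).
Proof.
  intro y. split.
  - intros [W [HP HL]]. apply LSubT_app_inv in HL. destruct HL as [W1 [W2 [y1 [y2 [-> [-> [H1 H2]]]]]]].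
    apply noocc_inv in H2. destruct H2 as [-> ->]. rewrite app_nil_r in HP.
    exists y1. split; auto. exists W1. auto.
  - intros [s' [[W [HP HL]] ->]]. exists (W ++ []). split. rewrite app_nil_r; auto.
    constructor; auto. apply (proj1 LSub_noocc).
Qed.

Lemma lin_bag_lift a v ws : seteq (lin_subst (RApp (RBag [vlift 0 v]) a) ws)
  (fun y => exists s', lin_subst a ws s' /\ y = RApp (RBag [v]) s').
Proof.
  intro y. split.
  - intros [W [HP HL]]. apply LSubT_app_inv in HL. destruct HL as [W1 [W2 [y1 [y2 [-> [-> [H1 H2]]]]]]].
    apply single_bag_inv in H1. destruct H1 as [v' [-> H1]].
    apply vnoocc_inv in H1. destruct H1 as [-> ->].
    exists y2. split; auto. exists W2. auto.
  - intros [s' [[W [HP HL]] ->]]. exists ([] ++ W). split; auto.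
    constructor; auto. apply single_bag_sub. apply (proj2 LSub_noocc).
Qed.

Lemma step_set_nfs x X G : UNI x -> rstep x X -> seteq X G -> forall u, NfR x u <-> nfs G u.
Proof. intros. rewrite (step_nfs x X H H0). apply nfs_ext. auto. Qed.

Lemma ltm_step e E y : rstep e E -> E y -> ltm y e.
Proof. intros. eapply (proj1 step_dec); eauto. Qed.

Lemma P_s1_appL a s1 s2 S : IHe (RApp (RApp (RBag [RLam a]) s1) s2) ->
  rstep (RApp (RBag [RLam a]) s1) S ->
  forall u, nfs (fun y => y = RApp (RBag [RLam (RApp a (tlift 0 s2))]) s1) u <->
            nfs (fun y => exists s', S s' /\ y = RApp s' s2) u.
Proof.
  intros IH HS0 u. rewrite nfs_single.
  assert (Hx1 : ltm (RApp (RBag [RLam (RApp a (tlift 0 s2))]) s1) (RApp (RApp (RBag [RLam a]) s1) s2)).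
  { eapply ltm_step. apply St_sigma1. reflexivity. }
  assert (He2 : forall y, (exists s', S s' /\ y = RApp s' s2) -> ltm y (RApp (RApp (RBag [RLam a]) s1) s2)).
  { intros. eapply ltm_step. apply St_appL. exact HS0. exact H. }
  inversion HS0; subst.
  -
    rewrite (step_set_nfs _ _ _ (IH _ Hx1) (St_beta _ _) (lin_app_lift a s2 vs)).
    apply nfs_ext. intro; tauto.
  - simpl in H2. lia.
  -
    set (y1 := RApp (RBag [RLam (RApp (RBag [vlift 0 (RLam a)]) t)]) s).
    assert (E2 : seteq (fun y => exists s', (fun u => u = y1) s' /\ y = RApp s' s2) (fun y => y = RApp y1 s2)).
    { intro y. split. intros [? [-> ->]]; auto. intros ->; eauto. }
    rewrite (nfs_ext _ _ E2). rewrite nfs_single.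
    assert (L2 : ltm (RApp y1 s2) (RApp (RApp (RBag [RLam a]) (RApp (RBag [RLam t]) s)) s2)) by (apply He2; eauto).
    rewrite (step1_nfs _ _ _ (IH _ L2) (St_sigma1 _ _ _) (fun _ => iff_refl _)).
    set (y3 := RApp (RBag [RLam (RApp (RApp (RBag [vlift 0 (RLam a)]) t) (tlift 0 s2))]) s).
    assert (L3 : ltm y3 (RApp (RApp (RBag [RLam a]) (RApp (RBag [RLam t]) s)) s2)).
    { eapply ltm_trans. 2: apply L2. eapply ltm_step. apply St_sigma1. reflexivity. }
    destruct (ctx_comp _ _ (ctx_appL s) (ctx_lam [] []) _ _ (St_sigma1 (tlift 1 a) t (tlift 0 s2)))
      as [Y [HY EY]].
    rewrite (step_set_nfs _ _ _ (IH _ L3) HY EY).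
    rewrite (step1_nfs _ _ _ (IH _ Hx1) (St_sigma3 _ _ _) (fun _ => iff_refl _)).
    simpl. rewrite (proj1 lift_lift) by lia.
    split.
    + intro H. exists (RApp (RBag [RLam (RApp (RBag [RLam (RApp (tlift 1 a) (tlift 0 (tlift 0 s2)))]) t)]) s).
      split; auto. eauto.
    + intros [x [[x' [-> ->]] H]]. auto.
  -
    pose proof H2 as HS. apply inv_bag_single in HS. destruct HS as [V [HV ->]].
    apply inv_vlam in HV. destruct HV as [T [HT ->]].
    set (G := fun y => exists t', T t' /\ y = RApp (RBag [RLam (RApp t' (tlift 0 s2))]) s1).
    assert (HC := ctx_comp _ _ (ctx_comp _ _ (ctx_appL s1) (ctx_lam [] [])) (ctx_appL (tlift 0 s2)) _ _ HT).
    destruct HC as [Y [HY EY]].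
    apply iff_trans with (nfs G u).
    + apply (step_set_nfs _ _ _ (IH _ Hx1) HY). intro y. rewrite (EY y). unfold G. tauto.
    + apply iff_sym. apply nfs_cover.
      * intros z Hz. split. apply IH. apply He2. exact Hz.
        destruct Hz as [s' [[x [[v' [[t' [HT' ->]] ->]] ->]] ->]].
        eexists. split. apply St_sigma1. intros g ->. unfold G. eauto.
      * intros g [t' [HT' ->]]. eexists. exists (fun y => y = RApp (RBag [RLam (RApp t' (tlift 0 s2))]) s1).
        repeat split. 2: apply St_sigma1. exists (RApp (RBag [RLam t']) s1). split; auto.
        exists (RBag [RLam t']). split; auto. exists (RLam t'). split; eauto.
  -
    set (G := fun y => exists s1', T s1' /\ y = RApp (RBag [RLam (RApp a (tlift 0 s2))]) s1').
    apply iff_trans with (nfs G u).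
    + apply (step_set_nfs _ _ _ (IH _ Hx1) (St_appR _ _ _ H2)). intro y. unfold G. tauto.
    + apply iff_sym. apply nfs_cover.
      * intros z Hz. split. apply IH. apply He2. exact Hz.
        destruct Hz as [s' [[x [Hx ->]] ->]].
        eexists. split. apply St_sigma1. intros g ->. unfold G. eauto.
      * intros g [t' [HT' ->]]. eexists. exists (fun y => y = RApp (RBag [RLam (RApp a (tlift 0 s2))]) t').
        repeat split. 2: apply St_sigma1. exists (RApp (RBag [RLam a]) t'). split; eauto.
Qed.

Lemma P_s1_appR a s1 s2 S : IHe (RApp (RApp (RBag [RLam a]) s1) s2) -> rstep s2 S ->
  forall u, nfs (fun y => y = RApp (RBag [RLam (RApp a (tlift 0 s2))]) s1) u <->
            nfs (fun y => exists s', S s' /\ y = RApp (RApp (RBag [RLam a]) s1) s') u.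
Proof.
  intros IH HS0 u. rewrite nfs_single.
  assert (Hx1 : ltm (RApp (RBag [RLam (RApp a (tlift 0 s2))]) s1) (RApp (RApp (RBag [RLam a]) s1) s2)).
  { eapply ltm_step. apply St_sigma1. reflexivity. }
  assert (He2 : forall y, (exists s', S s' /\ y = RApp (RApp (RBag [RLam a]) s1) s') -> ltm y (RApp (RApp (RBag [RLam a]) s1) s2)).
  { intros. eapply ltm_step. apply St_appR. exact HS0. exact H. }
  destruct ((proj1 lift_step) _ _ HS0 0) as [X [HX EX]].
  destruct (ctx_comp _ _ (ctx_comp _ _ (ctx_appL s1) (ctx_lam [] [])) (ctx_appR a) _ _ HX) as [Y [HY EY]].
  set (G := fun y => exists s', S s' /\ y = RApp (RBag [RLam (RApp a (tlift 0 s'))]) s1).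
  apply iff_trans with (nfs G u).
  - apply (step_set_nfs _ _ _ (IH _ Hx1) HY). intro y. rewrite (EY y). unfold G. split.
    + intros [x [Hx ->]]. apply EX in Hx. destruct Hx as [s' [Hs ->]]. eauto.
    + intros [s' [Hs ->]]. exists (tlift 0 s'). split; auto. apply EX. eauto.
  - apply iff_sym. apply nfs_cover.
    + intros z Hz. split. apply IH. apply He2. exact Hz.
      destruct Hz as [s' [Hs ->]].
      eexists. split. apply St_sigma1. intros g ->. unfold G. eauto.
    + intros g [t' [HT' ->]]. eexists. exists (fun y => y = RApp (RBag [RLam (RApp a (tlift 0 t'))]) s1).
      repeat split. 2: apply St_sigma1. eauto.
Qed.

Lemma P_s3_appL v a s S : IHe (RApp (RBag [v]) (RApp (RBag [RLam a]) s)) -> rstep (RBag [v]) S ->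
  forall u, nfs (fun y => y = RApp (RBag [RLam (RApp (RBag [vlift 0 v]) a)]) s) u <->
            nfs (fun y => exists s', S s' /\ y = RApp s' (RApp (RBag [RLam a]) s)) u.
Proof.
  intros IH HS0 u. rewrite nfs_single.
  assert (Hx1 : ltm (RApp (RBag [RLam (RApp (RBag [vlift 0 v]) a)]) s) (RApp (RBag [v]) (RApp (RBag [RLam a]) s))).
  { eapply ltm_step. apply St_sigma3. reflexivity. }
  assert (He2 : forall y, (exists s', S s' /\ y = RApp s' (RApp (RBag [RLam a]) s)) -> ltm y (RApp (RBag [v]) (RApp (RBag [RLam a]) s))).
  { intros. eapply ltm_step. apply St_appL. exact HS0. exact H. }
  pose proof HS0 as HS. apply inv_bag_single in HS. destruct HS as [V [HV ->]].
  destruct ((proj2 lift_step) _ _ HV 0) as [X [HX EX]].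
  assert (HB : rstep (RBag ([] ++ vlift 0 v :: [])) (fun y => exists w, X w /\ y = RBag ([] ++ w :: []))).
  { apply St_bag. auto. }
  simpl in HB.
  destruct (ctx_comp _ _ (ctx_comp _ _ (ctx_appL s) (ctx_lam [] [])) (fun x => ctx_appL a x) _ _ HB) as [Y [HY EY]].
  set (G := fun y => exists v', V v' /\ y = RApp (RBag [RLam (RApp (RBag [vlift 0 v']) a)]) s).
  apply iff_trans with (nfs G u).
  - apply (step_set_nfs _ _ _ (IH _ Hx1) HY). intro y. rewrite (EY y). unfold G. split.
    + intros [x [[w [Hw ->]] ->]]. apply EX in Hw. destruct Hw as [v' [Hv ->]]. eauto.
    + intros [v' [Hv ->]]. exists (RBag [vlift 0 v']). split; auto. exists (vlift 0 v'). split; auto. apply EX. eauto.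
  - apply iff_sym. apply nfs_cover.
    + intros z Hz. split. apply IH. apply He2. exact Hz.
      destruct Hz as [s' [[v' [Hv ->]] ->]].
      eexists. split. apply St_sigma3. intros g ->. unfold G. eauto.
    + intros g [v' [Hv ->]]. eexists. exists (fun y => y = RApp (RBag [RLam (RApp (RBag [vlift 0 v']) a)]) s).
      repeat split. 2: apply St_sigma3. exists (RBag [v']). split; eauto.
Qed.

Lemma P_s3_appR v a s S : IHe (RApp (RBag [v]) (RApp (RBag [RLam a]) s)) ->
  rstep (RApp (RBag [RLam a]) s) S ->
  forall u, nfs (fun y => y = RApp (RBag [RLam (RApp (RBag [vlift 0 v]) a)]) s) u <->
            nfs (fun y => exists s', S s' /\ y = RApp (RBag [v]) s') u.
Proof.
  intros IH HS0 u. rewrite nfs_single.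
  assert (Hx1 : ltm (RApp (RBag [RLam (RApp (RBag [vlift 0 v]) a)]) s) (RApp (RBag [v]) (RApp (RBag [RLam a]) s))).
  { eapply ltm_step. apply St_sigma3. reflexivity. }
  assert (He2 : forall y, (exists s', S s' /\ y = RApp (RBag [v]) s') -> ltm y (RApp (RBag [v]) (RApp (RBag [RLam a]) s))).
  { intros. eapply ltm_step. apply St_appR. exact HS0. exact H. }
  inversion HS0; subst.
  - rewrite (step_set_nfs _ _ _ (IH _ Hx1) (St_beta _ _) (lin_bag_lift a v vs)).
    apply nfs_ext. intro; tauto.
  - simpl in H2. lia.
  - set (y1 := RApp (RBag [RLam (RApp (RBag [vlift 0 (RLam a)]) t)]) s0).
    assert (E2 : seteq (fun y => exists s', (fun u => u = y1) s' /\ y = RApp (RBag [v]) s') (fun y => y = RApp (RBag [v]) y1)).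
    { intro y. split. intros [? [-> ->]]; auto. intros ->; eauto. }
    rewrite (nfs_ext _ _ E2). rewrite nfs_single.
    assert (L2 : ltm (RApp (RBag [v]) y1) (RApp (RBag [v]) (RApp (RBag [RLam a]) (RApp (RBag [RLam t]) s0)))) by (apply He2; eauto).
    rewrite (step1_nfs _ _ _ (IH _ L2) (St_sigma3 _ _ _) (fun _ => iff_refl _)).
    set (y3 := RApp (RBag [RLam (RApp (RBag [vlift 0 v]) (RApp (RBag [vlift 0 (RLam a)]) t))]) s0).
    assert (L3 : ltm y3 (RApp (RBag [v]) (RApp (RBag [RLam a]) (RApp (RBag [RLam t]) s0)))).
    { eapply ltm_trans. 2: apply L2. eapply ltm_step. apply St_sigma3. reflexivity. }
    destruct (ctx_comp _ _ (ctx_appL s0) (ctx_lam [] []) _ _ (St_sigma3 (vlift 0 v) (tlift 1 a) t))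
      as [Y [HY EY]].
    rewrite (step_set_nfs _ _ _ (IH _ L3) HY EY).
    rewrite (step1_nfs _ _ _ (IH _ Hx1) (St_sigma3 _ _ _) (fun _ => iff_refl _)).
    simpl. rewrite (proj2 lift_lift v 0 0) by lia.
    split.
    + intro H. eexists. split; [|exact H]. eauto.
    + intros [x [[x' [-> ->]] H]]. auto.
  - pose proof H2 as HS. apply inv_bag_single in HS. destruct HS as [V [HV ->]].
    apply inv_vlam in HV. destruct HV as [T [HT ->]].
    set (G := fun y => exists t', T t' /\ y = RApp (RBag [RLam (RApp (RBag [vlift 0 v]) t')]) s).
    assert (HC := ctx_comp _ _ (ctx_comp _ _ (ctx_appL s) (ctx_lam [] [])) (ctx_appR (RBag [vlift 0 v])) _ _ HT).
    destruct HC as [Y [HY EY]].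
    apply iff_trans with (nfs G u).
    + apply (step_set_nfs _ _ _ (IH _ Hx1) HY). intro y. rewrite (EY y). unfold G. tauto.
    + apply iff_sym. apply nfs_cover.
      * intros z Hz. split. apply IH. apply He2. exact Hz.
        destruct Hz as [s' [[x [[v' [[t' [HT' ->]] ->]] ->]] ->]].
        eexists. split. apply St_sigma3. intros g ->. unfold G. eauto.
      * intros g [t' [HT' ->]]. eexists. exists (fun y => y = RApp (RBag [RLam (RApp (RBag [vlift 0 v]) t')]) s).
        repeat split. 2: apply St_sigma3. exists (RApp (RBag [RLam t']) s). split; auto.
        exists (RBag [RLam t']). split; auto. exists (RLam t'). split; eauto.
  - set (G := fun y => exists s', T s' /\ y = RApp (RBag [RLam (RApp (RBag [vlift 0 v]) a)]) s').
    apply iff_trans with (nfs G u).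
    + apply (step_set_nfs _ _ _ (IH _ Hx1) (St_appR _ _ _ H2)). intro y. unfold G. tauto.
    + apply iff_sym. apply nfs_cover.
      * intros z Hz. split. apply IH. apply He2. exact Hz.
        destruct Hz as [s' [[x [Hx ->]] ->]].
        eexists. split. apply St_sigma3. intros g ->. unfold G. eauto.
      * intros g [t' [HT' ->]]. eexists. exists (fun y => y = RApp (RBag [RLam (RApp (RBag [vlift 0 v]) a)]) t').
        repeat split. 2: apply St_sigma3. exists (RApp (RBag [RLam a]) t'). split; eauto.
Qed.

Lemma ctxset (C : rterm -> rterm) e S :
  (forall x X, rstep x X -> exists Y, rstep (C x) Y /\ seteq Y (fun y => exists x', X x' /\ y = C x')) ->
  IHe e -> (forall s', S s' -> ltm (C s') e) ->
  forall u, nfs (fun y => exists s', S s' /\ y = C s') u <-> exists x'', nfs S x'' /\ NfR (C x'') u.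
Proof.
  intros HC IH HS u. split.
  - intros [y [[s' [Hs ->]] Hn]].
    destruct (ctx_fwd C HC s') with (u := u) as [x'' [H1 H2]]; auto.
    + intros x' Hr. apply IH. eapply leq_ltm. apply reach_leq. apply ctx_reach; eauto. auto.
    + exists x''. split; auto. exists s'. auto.
  - intros [x'' [[s' [Hs Hn]] H]]. exists (C s'). split; eauto. eapply ctx_back; eauto.
Qed.

Lemma P_same_ctx (C : rterm -> rterm) e s S1 S2 :
  (forall x X, rstep x X -> exists Y, rstep (C x) Y /\ seteq Y (fun y => exists x', X x' /\ y = C x')) ->
  IHe e -> ltm s e -> rstep s S1 -> rstep s S2 ->
  (forall s', S1 s' -> ltm (C s') e) -> (forall s', S2 s' -> ltm (C s') e) ->
  forall u, nfs (fun y => exists s', S1 s' /\ y = C s') u <-> nfs (fun y => exists s', S2 s' /\ y = C s') u.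
Proof.
  intros HC IH Hs H1 H2 L1 L2 u.
  rewrite (ctxset C e S1 HC IH L1). rewrite (ctxset C e S2 HC IH L2).
  split; intros [x'' [Hx Hn]]; exists x''; split; auto.
  - apply (step_nfs s S2 (IH _ Hs) H2). apply (step_nfs s S1 (IH _ Hs) H1). auto.
  - apply (step_nfs s S1 (IH _ Hs) H1). apply (step_nfs s S2 (IH _ Hs) H2). auto.
Qed.

Lemma P_appL_appL s t S1 S2 : IHe (RApp s t) -> rstep s S1 -> rstep s S2 ->
  forall u, nfs (fun y => exists s', S1 s' /\ y = RApp s' t) u <-> nfs (fun y => exists s', S2 s' /\ y = RApp s' t) u.
Proof.
  intros IH H1 H2. apply (P_same_ctx (fun x => RApp x t) (RApp s t) s); auto;
  first [apply ctx_appL | apply ltm_appL | (intros ? Hs; eapply ltm_step; [apply (St_appL _ _ _ H1) | simpl; eauto; fail]) | (intros ? Hs; eapply ltm_step; [apply (St_appL _ _ _ H2) | simpl; eauto; fail])].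
Qed.

Lemma P_appR_appR s t S1 S2 : IHe (RApp s t) -> rstep t S1 -> rstep t S2 ->
  forall u, nfs (fun y => exists s', S1 s' /\ y = RApp s s') u <-> nfs (fun y => exists s', S2 s' /\ y = RApp s s') u.
Proof.
  intros IH H1 H2. apply (P_same_ctx (fun x => RApp s x) (RApp s t) t); auto;
  first [apply ctx_appR | apply ltm_appR | (intros ? Hs; eapply ltm_step; [apply (St_appR _ _ _ H1) | simpl; eauto; fail]) | (intros ? Hs; eapply ltm_step; [apply (St_appR _ _ _ H2) | simpl; eauto; fail])].
Qed.

Lemma P_appL_appR s t S T : IHe (RApp s t) -> rstep s S -> rstep t T ->
  forall u, nfs (fun y => exists s', S s' /\ y = RApp s' t) u <-> nfs (fun y => exists t', T t' /\ y = RApp s t') u.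
Proof.
  intros IH HS HT u.
  apply iff_trans with (nfs (fun y => exists s' t', S s' /\ T t' /\ y = RApp s' t') u).
  - apply nfs_cover.
    + intros z Hz. split. eapply IHe_step. exact IH. apply St_appL. exact HS. exact Hz.
      destruct Hz as [s' [Hs ->]]. eexists. split. apply St_appR. exact HT.
      intros g [t' [Ht ->]]. eauto.
    + intros g [s' [t' [Hs [Ht ->]]]]. exists (RApp s' t). eexists. repeat split.
      eauto. apply St_appR. exact HT. hnf; eauto.
  - apply iff_sym. apply nfs_cover.
    + intros z Hz. split. eapply IHe_step. exact IH. apply St_appR. exact HT. exact Hz.
      destruct Hz as [t' [Ht ->]]. eexists. split. apply St_appL. exact HS.
      intros g [s' [Hs ->]]. eauto.
    + intros g [s' [t' [Hs [Ht ->]]]]. exists (RApp s t'). eexists. repeat split.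
      eauto. apply St_appL. exact HS. hnf; eauto.
Qed.

Lemma bag_pos (b1 b2 c1 c2 : list rval) v w : b1 ++ v :: b2 = c1 ++ w :: c2 ->
  (b1 = c1 /\ v = w /\ b2 = c2) \/ (exists m, c1 = b1 ++ v :: m /\ b2 = m ++ w :: c2) \/
  (exists m, b1 = c1 ++ w :: m /\ c2 = m ++ v :: b2).
Proof.
  intro H. destruct (app_split_cons _ _ _ _ _ H) as [[m [-> ->]]|[n [E ->]]].
  - right. right. eauto.
  - destruct n as [|x n]; simpl in E; injection E; intros; subst.
    + left. rewrite app_nil_r. auto.
    + right. left. exists n. auto.
Qed.

Lemma P_bag_diff b1 v m w c2 V W : IHe (RBag (b1 ++ v :: m ++ w :: c2)) -> vstep v V -> vstep w W ->
  forall u, nfs (fun y => exists v', V v' /\ y = RBag (b1 ++ v' :: m ++ w :: c2)) u <->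
            nfs (fun y => exists w', W w' /\ y = RBag ((b1 ++ v :: m) ++ w' :: c2)) u.
Proof.
  intros IH HV HW u.
  assert (EQ : forall x y, b1 ++ x :: m ++ y :: c2 = (b1 ++ x :: m) ++ y :: c2).
  { intros. rewrite <- app_assoc. reflexivity. }
  apply iff_trans with (nfs (fun y => exists v' w', V v' /\ W w' /\ y = RBag (b1 ++ v' :: m ++ w' :: c2)) u).
  - apply nfs_cover.
    + intros z Hz. split. eapply IHe_step. exact IH. apply St_bag. exact HV. exact Hz.
      destruct Hz as [v' [Hv ->]]. rewrite EQ. eexists. split. apply St_bag. exact HW.
      intros g [w' [Hw ->]]. rewrite <- EQ. eauto.
    + intros g [v' [w' [Hv [Hw ->]]]]. exists (RBag (b1 ++ v' :: m ++ w :: c2)).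
      exists (fun y => exists w'', W w'' /\ y = RBag ((b1 ++ v' :: m) ++ w'' :: c2)). split; [|split].
      * hnf. eauto.
      * rewrite EQ. apply St_bag. exact HW.
      * hnf. exists w'. rewrite EQ. auto.
  - apply iff_sym. apply nfs_cover.
    + intros z Hz. split. eapply IHe_step. exact IH. rewrite EQ. apply St_bag. exact HW. exact Hz.
      destruct Hz as [w' [Hw ->]]. rewrite <- EQ. eexists. split. apply St_bag. exact HV.
      intros g [v' [Hv ->]]. eauto.
    + intros g [v' [w' [Hv [Hw ->]]]]. exists (RBag ((b1 ++ v :: m) ++ w' :: c2)).
      exists (fun y => exists v'', V v'' /\ y = RBag (b1 ++ v'' :: m ++ w' :: c2)). split; [|split].
      * hnf. eauto.
      * rewrite <- EQ. apply St_bag. exact HV.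
      * hnf. eauto.
Qed.

Lemma P_bag_same b1 v b2 V1 V2 : IHe (RBag (b1 ++ v :: b2)) -> vstep v V1 -> vstep v V2 ->
  forall u, nfs (fun y => exists v', V1 v' /\ y = RBag (b1 ++ v' :: b2)) u <->
            nfs (fun y => exists v', V2 v' /\ y = RBag (b1 ++ v' :: b2)) u.
Proof.
  intros IH H1 H2 u.
  pose proof H1 as H1'. pose proof H2 as H2'.
  inversion H1'; subst. apply inv_vlam in H2'. destruct H2' as [T2 [HT2 ->]].
  assert (EE : forall T0 : rterm -> Prop, seteq (fun y => exists v', (exists t', T0 t' /\ v' = RLam t') /\ y = RBag (b1 ++ v' :: b2))
                  (fun y => exists t', T0 t' /\ y = RBag (b1 ++ RLam t' :: b2))).
  { intros T0 y. split. intros [v' [[t' [Ht ->]] ->]]. eauto. intros [t' [Ht ->]]. eauto. }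
  rewrite (nfs_ext _ _ (EE T)). rewrite (nfs_ext _ _ (EE T2)).
  apply (P_same_ctx (fun x => RBag (b1 ++ RLam x :: b2)) (RBag (b1 ++ RLam t :: b2)) t); auto;
  first [apply ctx_lam | apply ltm_lam | (intros ? Hs; eapply ltm_step; [apply (St_bag _ _ _ _ H1) | simpl; eauto; fail]) | (intros ? Hs; eapply ltm_step; [apply (St_bag _ _ _ _ H2) | simpl; eauto; fail])].
Qed.

Ltac pair_tac :=
  first [ eapply P_beta_appL; eassumption | apply iff_sym; eapply P_beta_appL; eassumption
        | eapply P_beta_appR; eassumption | apply iff_sym; eapply P_beta_appR; eassumption
        | eapply P_zero_appL; eassumption | apply iff_sym; eapply P_zero_appL; eassumption
        | eapply P_zero_appR; eassumption | apply iff_sym; eapply P_zero_appR; eassumption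
        | eapply P_s1_appL; eassumption | apply iff_sym; eapply P_s1_appL; eassumption
        | eapply P_s1_appR; eassumption | apply iff_sym; eapply P_s1_appR; eassumption
        | eapply P_s3_appL; eassumption | apply iff_sym; eapply P_s3_appL; eassumption
        | eapply P_s3_appR; eassumption | apply iff_sym; eapply P_s3_appR; eassumption
        | eapply P_appL_appL; eassumption | eapply P_appR_appR; eassumption
        | eapply P_appL_appR; eassumption | apply iff_sym; eapply P_appL_appR; eassumption ].

Lemma LC e : IHe e -> forall E1 E2, rstep e E1 -> rstep e E2 -> forall u, nfs E1 u <-> nfs E2 u.
Proof.
  intros IH E1 E2 H1 H2 u.
  inversion H1; subst; inversion H2; subst; try (simpl in *; lia); try discriminate; try (apply iff_refl);
  try pair_tac.
  match goal with E : _ ++ _ :: _ = _ ++ _ :: _ |- _ => symmetry in E; apply bag_pos in E;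
    destruct E as [[-> [-> ->]]|[[m [-> ->]]|[m [-> ->]]]] end.
  - eapply P_bag_same; eauto.
  - eapply P_bag_diff; eauto.
  - apply iff_sym. rewrite <- app_assoc in IH. simpl in IH. eapply P_bag_diff; eauto.
Qed.

Theorem UNI_all : forall e, UNI e.
Proof.
  intro e. induction e as [e IH] using (well_founded_induction ltm_wf).
  intros E HE u Hu. destruct Hu as [e Hn|e E2 y u HE2 Hy Hyu].
  - exfalso. apply Hn. eauto.
  - apply (LC e IH E E2 HE HE2 u). exists y. auto.
Qed.


Lemma NfR_out_normal e u : NfR e u -> rnormal u.
Proof. induction 1; auto. Qed.

Lemma sstep_nfs E E' : sstep E E' -> forall u, nfs E u <-> nfs E' u.
Proof.
  intros [e [E1 [He [HS HE']]]] u. split.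
  - intros [x [Hx Hn]]. destruct (classic (x = e)) as [->|Hne].
    + destruct (UNI_all e E1 HS u Hn) as [y [Hy Hyn]]. exists y. split; auto. apply HE'. auto.
    + exists x. split; auto. apply HE'. auto.
  - intros [x [Hx Hn]]. apply HE' in Hx. destruct Hx as [[Hx _]|Hx].
    + exists x. auto.
    + exists e. split; auto. eapply NfR_step; eauto.
Qed.

Lemma sred_nfs E F : sred E F -> forall u, nfs E u <-> nfs F u.
Proof.
  induction 1; intro u. tauto. rewrite (sstep_nfs _ _ H u). auto.
Qed.

Lemma is_nf_iff e F : is_nf e F -> forall u, F u <-> NfR e u.
Proof.
  intros [HR HN] u. rewrite <- nfs_single. rewrite (sred_nfs _ _ HR u). split.
  - intro H. exists u. split; auto. constructor. auto.
  - intros [x [Hx Hn]]. apply NfR_normal in Hn; auto. subst; auto.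
Qed.

Definition fin (X : rterm -> Prop) := exists l, forall u, X u <-> In u l.

Fixpoint insert_all {A} (x : A) (l : list A) : list (list A) :=
  match l with
  | [] => [[x]]
  | y :: l' => (x :: y :: l') :: map (cons y) (insert_all x l')
  end.

Fixpoint perms {A} (l : list A) : list (list A) :=
  match l with
  | [] => [[]]
  | x :: l' => flat_map (insert_all x) (perms l')
  end.

Lemma in_insert_all {A} (x : A) c1 c2 : In (c1 ++ x :: c2) (insert_all x (c1 ++ c2)).
Proof.
  induction c1; simpl.
  - destruct c2; simpl; auto.
  - right. apply in_map. auto.
Qed.

Lemma perms_complete {A} (l l' : list A) : Permutation l l' -> In l' (perms l).
Proof.
  revert l'. induction l; intros l' H.
  - apply Permutation_nil in H. subst. simpl. auto.
  - assert (In a l'). { eapply Permutation_in. apply H. left; auto. }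
    apply in_split in H0. destruct H0 as [c1 [c2 ->]].
    apply Permutation_cons_app_inv in H. simpl. apply in_flat_map.
    exists (c1 ++ c2). split; auto. apply in_insert_all.
Qed.

Lemma fin_image {A} (P : A -> rterm -> Prop) (l : list A) :
  (forall a u1 u2, P a u1 -> P a u2 -> u1 = u2) ->
  exists lu, forall u, In u lu <-> exists a, In a l /\ P a u.
Proof.
  intro Hf. induction l.
  - exists []. simpl. split; [intros []|intros [? [[] _]]].
  - destruct IHl as [lu Hlu]. destruct (classic (exists u, P a u)) as [[u Hu]|Hn].
    + exists (u :: lu). intro y. simpl. rewrite Hlu. split.
      * intros [<-|[a' [Ha' Hp]]]; eauto.
      * intros [a' [[<-|Ha'] Hp]]; [left; eapply Hf; eauto | right; eauto].
    + exists lu. intro y. rewrite Hlu. split.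
      * intros [a' [Ha' Hp]]. exists a'. simpl; auto.
      * intros [a' [[<-|Ha'] Hp]]; [exfalso; eauto | eauto].
Qed.

Lemma fin_map (X : rterm -> Prop) (f : rterm -> rterm) : fin X ->
  fin (fun y => exists x, X x /\ y = f x).
Proof.
  intros [l Hl]. exists (map f l). intro y. rewrite in_map_iff. split.
  - intros [x [Hx ->]]. exists x. split; auto. apply Hl; auto.
  - intros [x [<- Hx]]. exists x. split; auto. apply Hl; auto.
Qed.

Lemma step_fin : (forall e E, rstep e E -> fin E) /\
  (forall v V, vstep v V -> exists l, forall w, V w <-> In w l).
Proof.
  apply step_ind'; intros.
  - destruct (fin_image (fun W u => Permutation vs W /\ LSubT 0 W t u) (perms vs)) as [lu Hlu].
    { intros a u1 u2 [_ H1] [_ H2]. eapply (proj1 LSub_det); eauto. }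
    exists lu. intro u. rewrite Hlu. split.
    + intros [W [HP HL]]. exists W. split; auto. apply perms_complete; auto.
    + intros [W [_ [HP HL]]]. exists W. auto.
  - exists []. intro; simpl; tauto.
  - exists [RApp (RBag [RLam (RApp t (tlift 0 s2))]) s1]. intro; simpl; split; intuition.
  - exists [RApp (RBag [RLam (RApp (RBag [vlift 0 v]) t)]) s]. intro; simpl; split; intuition.
  - apply (fin_map S (fun x => RApp x t)); auto.
  - apply (fin_map T (fun x => RApp s x)); auto.
  - destruct H0 as [l Hl]. exists (map (fun w => RBag (b1 ++ w :: b2)) l). intro y.
    rewrite in_map_iff. split.
    + intros [w [Hw ->]]. exists w. split; auto. apply Hl; auto.
    + intros [w [<- Hw]]. exists w. split; auto. apply Hl; auto.
  - destruct H0 as [l Hl]. exists (map RLam l). intro y.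
    rewrite in_map_iff. split.
    + intros [w [Hw ->]]. exists w. split; auto. apply Hl; auto.
    + intros [w [<- Hw]]. exists w. split; auto. apply Hl; auto.
Qed.

Lemma W_bound : (forall t, WT t <= 4 ^ sizeT t) /\ (forall v, WV v <= 4 ^ sizeV v).
Proof.
  apply tv_ind; intros; cbn [WT sizeT WV sizeV map lsum].
  - rewrite Nat.pow_succ_r', Nat.pow_add_r. nia.
  - assert (2 + lsum (map WV b) <= 4 ^ S (lsum (map sizeV b))); [|lia].
    induction H as [|x l Hx Hl IHl]; cbn [map lsum]. simpl; lia.
    assert (1 <= sizeV x) by (destruct x; simpl; lia).
    assert (4 <= 4 ^ sizeV x). { replace 4 with (4 ^ 1) at 1 by reflexivity. apply Nat.pow_le_mono_r; lia. }
    assert (1 <= 4 ^ lsum (map sizeV l)). { apply Nat.neq_0_lt_0. apply Nat.pow_nonzero. lia. }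
    rewrite Nat.pow_succ_r' in IHl |- *. rewrite Nat.pow_add_r. nia.
  - simpl; lia.
  - rewrite Nat.pow_succ_r'. lia.
Qed.

Definition mu (t : rterm) := 2 * 4 ^ sizeT t + WT t.

Lemma mu_ltm a b : ltm a b -> mu a < mu b.
Proof.
  unfold mu, ltm. intros [H|[H1 H2]].
  - pose proof ((proj1 W_bound) a). pose proof ((proj1 W_bound) b).
    assert (HP : 4 ^ S (sizeT a) <= 4 ^ sizeT b) by (apply Nat.pow_le_mono_r; lia).
    rewrite Nat.pow_succ_r' in HP. assert (1 <= 4 ^ sizeT a) by (apply Nat.neq_0_lt_0; apply Nat.pow_nonzero; lia). lia.
  - rewrite H1. lia.
Qed.

Lemma WN_outer : forall n E l, (forall u, E u -> In u l) ->
  (forall x, E x -> ~ rnormal x -> mu x < n) ->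
  exists F, sred E F /\ forall u, F u -> rnormal u.
Proof.
  induction n; intros E l Hl Hb.
  - exists E. split. constructor. intros u Hu. apply NNPP. intro Hn. specialize (Hb _ Hu Hn). lia.
  - assert (forall H R E, (forall u, E u -> In u H \/ In u R) ->
              (forall x, E x -> In x R -> ~ rnormal x -> mu x < n) ->
              (forall x, E x -> ~ rnormal x -> mu x <= n) ->
              exists F, sred E F /\ forall u, F u -> rnormal u) as Inner.
    { induction H as [|x H IHH]; intros R E0 H1 H2 H3.
      - apply (IHn E0 R). intros u Hu. destruct (H1 _ Hu) as [[]|]; auto.
        intros x Hx Hn. apply H2; auto. destruct (H1 _ Hx) as [[]|]; auto.
      - destruct (classic (E0 x /\ ~ rnormal x /\ mu x = n)) as [[Ex [Nx Mx]]|Hno].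
        + apply NNPP in Nx.
          destruct Nx as [X HX]. destruct ((proj1 step_fin) _ _ HX) as [lX HlX].
          set (E' := fun u => (E0 u /\ u <> x) \/ X u).
          destruct (IHH (R ++ lX) E') as [F [HF1 HF2]].
          * intros u [[Hu Hne]|Hu].
            -- destruct (H1 _ Hu) as [[->|]|]; auto. contradiction. right. apply in_or_app. auto.
            -- right. apply in_or_app. right. apply HlX. auto.
          * intros y Hy Hin Hn. apply in_app_or in Hin.
            assert (X y -> mu y < n).
            { intro Xy. rewrite <- Mx. apply mu_ltm. eapply (proj1 step_dec); eauto. }
            destruct Hy as [[Hy Hne]|Hy]; auto. destruct Hin; auto. apply H0. apply HlX. auto.
          * intros y [[Hy _]|Hy] Hn. auto.
            assert (mu y < mu x) by (apply mu_ltm; eapply (proj1 step_dec); eauto). lia.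
          * exists F. split; auto. eapply sred_step; eauto. exists x, X. repeat split; auto.
        + apply (IHH (x :: R) E0).
          * intros u Hu. destruct (H1 _ Hu) as [[->|]|]; simpl; auto.
          * intros y Hy [->|Hin] Hn; auto.
            specialize (H3 _ Hy Hn). assert (mu y <> n) by (intro; apply Hno; auto). lia.
          * auto. }
    apply (Inner l [] E); auto.
    + intros x Hx [] Hn.
    + intros x Hx Hn. specialize (Hb _ Hx Hn). lia.
Qed.

Lemma WN e : exists F, is_nf e F.
Proof.
  destruct (WN_outer (S (mu e)) (fun u => u = e) [e]) as [F [HF1 HF2]].
  - intros u ->. simpl; auto.
  - intros x -> _. lia.
  - exists F. split; auto.
Qed.

Lemma NF_iff E t : NF E t <-> exists e, E e /\ NfR e t.
Proof.
  split.
  - intros [e [F [He [HF Ft]]]]. exists e. split; auto. apply (is_nf_iff e F HF). auto.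
  - intros [e [He Hn]]. destruct (WN e) as [F HF]. exists e, F. split; [auto|split; [auto|]].
    apply (is_nf_iff e F HF). auto.
Qed.


Lemma req_app_inv s t x : req (RApp s t) x -> exists s' t', x = RApp s' t' /\ req s s' /\ req t t'.
Proof. intro H. inversion H; subst. eauto. Qed.
Lemma req_bag_inv b x : req (RBag b) x -> exists b1 b2, x = RBag b2 /\ Permutation b b1 /\ bpw b1 b2.
Proof. intro H. inversion H; subst. eauto. Qed.
Lemma vreq_var_inv j x : vreq (RVar j) x -> x = RVar j.
Proof. intro H. inversion H; subst. auto. Qed.
Lemma vreq_lam_inv t x : vreq (RLam t) x -> exists t', x = RLam t' /\ req t t'.
Proof. intro H. inversion H; subst. eauto. Qed.
Lemma bpw_nil_inv y : bpw [] y -> y = [].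
Proof. intro H. inversion H; auto. Qed.
Lemma bpw_cons_inv a l y : bpw (a :: l) y -> exists a' l', y = a' :: l' /\ vreq a a' /\ bpw l l'.
Proof. intro H. inversion H; subst. eauto. Qed.
Lemma bpw_app_inv l1 l2 y : bpw (l1 ++ l2) y -> exists y1 y2, y = y1 ++ y2 /\ bpw l1 y1 /\ bpw l2 y2.
Proof.
  revert y. induction l1; intros y H; simpl in H.
  - exists [], y. repeat split; auto. constructor.
  - apply bpw_cons_inv in H. destruct H as [a' [l' [-> [Ha Hl]]]].
    destruct (IHl1 _ Hl) as [y1 [y2 [-> [H1 H2]]]]. exists (a' :: y1), y2. repeat split; auto. constructor; auto.
Qed.
Lemma bpw_app l1 l2 y1 y2 : bpw l1 y1 -> bpw l2 y2 -> bpw (l1 ++ l2) (y1 ++ y2).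
Proof. induction 1; intros; simpl; auto. constructor; auto. Qed.
Lemma bpw_length l y : bpw l y -> length l = length y.
Proof. induction 1; simpl; auto. Qed.

Lemma Forall_perm {A} (P : A -> Prop) l l' : Permutation l l' -> Forall P l -> Forall P l'.
Proof. intros HP HF. rewrite Forall_forall in *. intros x Hx. apply HF. eapply Permutation_in. apply Permutation_sym; eauto. auto. Qed.

Lemma bpw_perm x z : bpw x z -> forall x', Permutation x x' -> exists y', Permutation z y' /\ bpw x' y'.
Proof.
  intros H x' HP. revert z H. induction HP; intros z H.
  - apply bpw_nil_inv in H. subst. exists []. split; constructor.
  - apply bpw_cons_inv in H. destruct H as [a0 [m0 [-> [Ha Hl]]]].
    destruct (IHHP _ Hl) as [y' [P Hy]]. exists (a0 :: y'). split; constructor; auto.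
  - apply bpw_cons_inv in H. destruct H as [a0 [m0 [-> [Ha Hl]]]].
    apply bpw_cons_inv in Hl. destruct Hl as [b0 [m1 [-> [Hb Hl]]]].
    exists (b0 :: a0 :: m1). split. constructor. constructor; auto. constructor; auto.
  - destruct (IHHP1 _ H) as [y1 [P1 H1]]. destruct (IHHP2 _ H1) as [y2 [P2 H2]].
    exists y2. split; eauto using Permutation_trans.
Qed.

Lemma bpw_cons_tinv z a l : bpw z (a :: l) -> exists a0 l0, z = a0 :: l0 /\ vreq a0 a /\ bpw l0 l.
Proof. intro H. inversion H; subst. eauto. Qed.
Lemma bpw_nil_tinv z : bpw z [] -> z = [].
Proof. intro H. inversion H; auto. Qed.

Lemma bpw_perm_r z y : bpw z y -> forall y', Permutation y y' -> exists x', Permutation z x' /\ bpw x' y'.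
Proof.
  intros H y' HP. revert z H. induction HP; intros z H.
  - apply bpw_nil_tinv in H. subst. exists []. split; constructor.
  - apply bpw_cons_tinv in H. destruct H as [a0 [m0 [-> [Ha Hl]]]].
    destruct (IHHP _ Hl) as [x' [P Hx]]. exists (a0 :: x'). split; constructor; auto.
  - apply bpw_cons_tinv in H. destruct H as [a0 [m0 [-> [Ha Hl]]]].
    apply bpw_cons_tinv in Hl. destruct Hl as [b0 [m1 [-> [Hb Hl]]]].
    exists (b0 :: a0 :: m1). split. constructor. constructor; auto. constructor; auto.
  - destruct (IHHP1 _ H) as [y1 [P1 H1]]. destruct (IHHP2 _ H1) as [y2 [P2 H2]].
    exists y2. split; eauto using Permutation_trans.
Qed.

Lemma req_refl : (forall t, req t t) /\ (forall v, vreq v v).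
Proof.
  apply tv_ind; intros; try constructor; auto.
  apply req_bag with b. apply Permutation_refl.
  induction H; constructor; auto.
Qed.

Lemma bpw_refl b : bpw b b.
Proof. induction b; constructor; auto. apply (proj2 req_refl). Qed.

Lemma req_sym : (forall t t', req t t' -> req t' t) /\ (forall v v', vreq v v' -> vreq v' v).
Proof.
  apply tv_ind.
  - intros s t IHs IHt x H. apply req_app_inv in H. destruct H as [s' [t' [-> [H1 H2]]]]. constructor; auto.
  - intros b Hb x H. apply req_bag_inv in H. destruct H as [b1 [b2 [-> [HP HB]]]].
    apply (Forall_perm _ _ _ HP) in Hb.
    assert (bpw b2 b1).
    { clear HP. induction HB; constructor; inversion Hb; subst; auto. }
    destruct (bpw_perm_r _ _ H b (Permutation_sym HP)) as [b2' [P2 H2]].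
    econstructor; eauto.
  - intros j x H. apply vreq_var_inv in H. subst. constructor.
  - intros t IH x H. apply vreq_lam_inv in H. destruct H as [t' [-> H]]. constructor. auto.
Qed.

Lemma req_trans : (forall a b c, req a b -> req b c -> req a c) /\
  (forall a b c, vreq a b -> vreq b c -> vreq a c).
Proof.
  apply tv_ind.
  - intros s t IHs IHt b c H1 H2. apply req_app_inv in H1. destruct H1 as [s' [t' [-> [H1 H1']]]].
    apply req_app_inv in H2. destruct H2 as [s'' [t'' [-> [H2 H2']]]]. constructor; eauto.
  - intros x Hx b c H1 H2. apply req_bag_inv in H1. destruct H1 as [x1 [y [-> [P1 B1]]]].
    apply req_bag_inv in H2. destruct H2 as [y1 [z [-> [P2 B2]]]].
    destruct (bpw_perm_r _ _ B1 _ P2) as [x2 [P3 B3]].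
    apply (Forall_perm _ _ _ P1) in Hx. apply (Forall_perm _ _ _ P3) in Hx.
    apply req_bag with x2. eauto using Permutation_trans.
    clear -Hx B3 B2. revert z B2. induction B3; intros z B2.
    + inversion B2; subst. constructor.
    + inversion B2; subst. inversion Hx; subst. constructor; eauto.
  - intros j b c H1 H2. apply vreq_var_inv in H1. subst. auto.
  - intros t IH b c H1 H2. apply vreq_lam_inv in H1. destruct H1 as [t' [-> H1]].
    apply vreq_lam_inv in H2. destruct H2 as [t'' [-> H2]]. constructor. eauto.
Qed.

Lemma req_lift : (forall t t', req t t' -> forall c, req (tlift c t) (tlift c t')) /\
  (forall v v', vreq v v' -> forall c, vreq (vlift c v) (vlift c v')).
Proof.
  apply tv_ind.
  - intros s t IHs IHt x H c. apply req_app_inv in H. destruct H as [s' [t' [-> [H1 H2]]]]. simpl. constructor; auto.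
  - intros b Hb x H c. apply req_bag_inv in H. destruct H as [b1 [b2 [-> [HP HB]]]].
    apply (Forall_perm _ _ _ HP) in Hb. simpl.
    apply req_bag with (map (vlift c) b1). apply Permutation_map; auto.
    clear HP. induction HB; simpl; constructor; inversion Hb; subst; auto.
  - intros j x H c. apply vreq_var_inv in H. subst. constructor.
  - intros t IH x H c. apply vreq_lam_inv in H. destruct H as [t' [-> H]]. simpl. constructor. auto.
Qed.

Lemma vreq_iterl n v v' : vreq v v' -> vreq (iterl n v) (iterl n v').
Proof. induction n; simpl; auto. intro. apply (proj2 req_lift). auto. Qed.

Lemma req_LSub :
  (forall t t' k L y L', req t t' -> LSubT k L t y -> bpw L L' ->
     exists L'' y', Permutation L' L'' /\ LSubT k L'' t' y' /\ req y y') /\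
  (forall v v' k L y L', vreq v v' -> LSubV k L v y -> bpw L L' ->
     exists L'' y', Permutation L' L'' /\ LSubV k L'' v' y' /\ vreq y y').
Proof.
  apply tv_ind.
  - intros s t IHs IHt x k L y L' H HL HB.
    apply req_app_inv in H. destruct H as [s' [t' [-> [H1 H2]]]].
    apply LSubT_app_inv in HL. destruct HL as [L1 [L2 [y1 [y2 [-> [-> [HL1 HL2]]]]]]].
    apply bpw_app_inv in HB. destruct HB as [L1' [L2' [-> [HB1 HB2]]]].
    destruct (IHs _ _ _ _ _ H1 HL1 HB1) as [M1 [z1 [P1 [Z1 R1]]]].
    destruct (IHt _ _ _ _ _ H2 HL2 HB2) as [M2 [z2 [P2 [Z2 R2]]]].
    exists (M1 ++ M2), (RApp z1 z2). repeat split.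
    apply Permutation_app; auto. constructor; auto. constructor; auto.
  - intros b Hb x k L y L' H HL HB.
    apply req_bag_inv in H. destruct H as [b1 [b2 [-> [HP HBW]]]].
    apply LSubT_bag_inv in HL. destruct HL as [c [-> HL]].
    destruct (permB_src _ _ _ _ HL _ HP) as [L1 [c1 [PL [Pc HL1]]]].
    destruct (bpw_perm _ _ HB _ PL) as [L1' [PL' HB1]].
    apply (Forall_perm _ _ _ HP) in Hb.
    assert (exists L2 c2, Permutation L1' L2 /\ LSubB k L2 b2 c2 /\ bpw c1 c2) as [L2 [c2 [P2 [HL2 HC]]]].
    { clear -Hb HBW HL1 HB1. revert L1 c1 L1' HL1 HB1. induction HBW; intros L1 c1 L1' HL1 HB1.
      - apply LSubB_nil_inv in HL1. destruct HL1; subst. apply bpw_nil_inv in HB1. subst.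
        exists [], []. repeat constructor.
      - inversion Hb; subst.
        apply LSubB_cons_inv in HL1. destruct HL1 as [La [Lb [w [c' [-> [-> [Hw Hc]]]]]]].
        apply bpw_app_inv in HB1. destruct HB1 as [La' [Lb' [-> [Ba Bb]]]].
        destruct (H2 _ _ _ _ _ H Hw Ba) as [Ma [w' [Pa [Wa Ra]]]].
        destruct (IHHBW H3 _ _ _ Hc Bb) as [Mb [c2 [Pb [Wb Rb]]]].
        exists (Ma ++ Mb), (w' :: c2). repeat split.
        apply Permutation_app; auto. constructor; auto. constructor; auto. }
    exists L2, (RBag c2). repeat split.
    eauto using Permutation_trans. constructor; auto. econstructor; eauto.
  - intros j x k L y L' H HL HB. apply vreq_var_inv in H. subst.
    apply LSubV_var_inv in HL. destruct HL as [[H1 [-> ->]]|[[H1 [-> ->]]|[-> [w [-> ->]]]]].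
    + apply bpw_nil_inv in HB. subst. exists [], (RVar j). repeat constructor; auto.
    + apply bpw_nil_inv in HB. subst. exists [], (RVar (pred j)). repeat split; auto. apply LS_gt; auto. constructor.
    + apply bpw_cons_inv in HB. destruct HB as [w' [l' [-> [Hw Hl]]]]. apply bpw_nil_inv in Hl. subst.
      exists [w'], (iterl k w'). repeat split; auto. apply LS_hit. apply vreq_iterl. auto.
  - intros t IH x k L y L' H HL HB. apply vreq_lam_inv in H. destruct H as [t' [-> H]].
    apply LSubV_lam_inv in HL. destruct HL as [z [-> HL]].
    destruct (IH _ _ _ _ _ H HL HB) as [M [z' [P [Z R]]]].
    exists M, (RLam z'). repeat split; auto. constructor; auto. constructor; auto.
Qed.

Lemma req_single_inv v x : req (RBag [v]) x -> exists v', x = RBag [v'] /\ vreq v v'.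
Proof.
  intro H. apply req_bag_inv in H. destruct H as [b1 [b2 [-> [HP HB]]]].
  apply Permutation_length_1_inv in HP. subst. apply bpw_cons_inv in HB.
  destruct HB as [a' [l' [-> [Ha Hl]]]]. apply bpw_nil_inv in Hl. subst. eauto.
Qed.

Lemma req_single v v' : vreq v v' -> req (RBag [v]) (RBag [v']).
Proof. intro. apply req_bag with [v]. apply Permutation_refl. constructor; auto. constructor. Qed.

Lemma req_sim : (forall e E, rstep e E -> forall e', req e e' ->
     exists E', rstep e' E' /\ forall y, E y -> exists y', E' y' /\ req y y') /\
  (forall v V, vstep v V -> forall v', vreq v v' ->
     exists V', vstep v' V' /\ forall w, V w -> exists w', V' w' /\ vreq w w').
Proof.
  apply step_ind'.
  - intros a ws x H. apply req_app_inv in H. destruct H as [x1 [x2 [-> [H1 H2]]]].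
    apply req_single_inv in H1. destruct H1 as [v' [-> Hv]]. apply vreq_lam_inv in Hv. destruct Hv as [a2 [-> Ha]].
    apply req_bag_inv in H2. destruct H2 as [ws1 [ws2 [-> [HP HB]]]].
    eexists. split. apply St_beta. intros y [W [HW HL]].
    destruct (bpw_perm _ _ HB W (Permutation_trans (Permutation_sym HP) HW)) as [W2 [P2 B2]].
    destruct ((proj1 req_LSub) _ _ _ _ _ _ Ha HL B2) as [L'' [y' [P3 [HL' R]]]].
    exists y'. split; auto. exists L''. split; eauto using Permutation_trans.
  - intros b t Hb x H. apply req_app_inv in H. destruct H as [x1 [x2 [-> [H1 H2]]]].
    apply req_bag_inv in H1. destruct H1 as [b1 [b2 [-> [HP HB]]]].
    eexists. split. apply St_zero. apply Permutation_length in HP. apply bpw_length in HB. congruence.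
    intros y [].
  - intros a s1 s2 x H. apply req_app_inv in H. destruct H as [x1 [s2' [-> [H1 H2]]]].
    apply req_app_inv in H1. destruct H1 as [x0 [s1' [-> [H1 H3]]]].
    apply req_single_inv in H1. destruct H1 as [v' [-> Hv]]. apply vreq_lam_inv in Hv. destruct Hv as [a2 [-> Ha]].
    eexists. split. apply St_sigma1. intros y ->. eexists. split. reflexivity.
    constructor; auto. apply req_single. constructor. constructor; auto. apply (proj1 req_lift). auto.
  - intros v a s x H. apply req_app_inv in H. destruct H as [x1 [x2 [-> [H1 H2]]]].
    apply req_single_inv in H1. destruct H1 as [v' [-> Hv]].
    apply req_app_inv in H2. destruct H2 as [x0 [s' [-> [H2 H3]]]].
    apply req_single_inv in H2. destruct H2 as [w' [-> Hw]]. apply vreq_lam_inv in Hw. destruct Hw as [a2 [-> Ha]].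
    eexists. split. apply St_sigma3. intros y ->. eexists. split. reflexivity.
    constructor; auto. apply req_single. constructor. constructor; auto. apply req_single. apply (proj2 req_lift). auto.
  - intros s t S _ IH x H. apply req_app_inv in H. destruct H as [s' [t' [-> [H1 H2]]]].
    destruct (IH _ H1) as [S' [HS' E']]. eexists. split. apply St_appL. apply HS'.
    intros y [s0 [Hs0 ->]]. destruct (E' _ Hs0) as [s1 [Hs1 R]]. exists (RApp s1 t'). split; eauto. constructor; auto.
  - intros s t S _ IH x H. apply req_app_inv in H. destruct H as [s' [t' [-> [H1 H2]]]].
    destruct (IH _ H2) as [S' [HS' E']]. eexists. split. apply St_appR. apply HS'.
    intros y [s0 [Hs0 ->]]. destruct (E' _ Hs0) as [s1 [Hs1 R]]. exists (RApp s' s1). split; eauto. constructor; auto.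
  - intros b1 v b2 V _ IH x H. apply req_bag_inv in H. destruct H as [d [c [-> [HP HB]]]].
    destruct (perm_elt_inv _ _ _ _ HP) as [d1 [d2 [-> P2]]].
    apply bpw_app_inv in HB. destruct HB as [c1 [c2' [-> [B1 B2]]]].
    apply bpw_cons_inv in B2. destruct B2 as [v' [c2 [-> [Hv B2]]]].
    destruct (IH _ Hv) as [V' [HV' E']]. eexists. split. apply St_bag. apply HV'.
    intros y [w [Hw ->]]. destruct (E' _ Hw) as [w' [Hw' R]]. exists (RBag (c1 ++ w' :: c2)). split; eauto.
    apply req_bag with (d1 ++ w :: d2). apply Permutation_elt. auto.
    apply bpw_app; auto. constructor; auto.
  - intros t T _ IH x H. apply vreq_lam_inv in H. destruct H as [t' [-> H]].
    destruct (IH _ H) as [T' [HT' E']]. eexists. split. apply St_lam. apply HT'.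
    intros y [s0 [Hs0 ->]]. destruct (E' _ Hs0) as [s1 [Hs1 R]]. exists (RLam s1). split; eauto. constructor; auto.
Qed.

Lemma NfR_req : forall e u, NfR e u -> forall e', req e e' -> exists u', NfR e' u' /\ req u u'.
Proof.
  induction 1; intros e' He.
  - exists e'. split; auto. constructor. intros [E' HE'].
    destruct ((proj1 req_sim) _ _ HE' e ((proj1 req_sym) _ _ He)) as [E [HE _]].
    apply H. eauto.
  - destruct ((proj1 req_sim) _ _ H e' He) as [E' [HE' F]].
    destruct (F _ H0) as [y' [Hy' R]]. destruct (IHNfR _ R) as [u' [Hu' R']].
    exists u'. split; auto. eapply NfR_step; eauto.
Qed.


Definition Sim (X Y : rterm -> Prop) := forall t, NF X t -> exists t', req t t' /\ NF Y t'.

Lemma all_UNI C x : forall x', reach x' x -> UNI (C x').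
Proof. intros. apply UNI_all. Qed.

Lemma Sim_app M N Q : Sim (taylor M) (taylor N) -> Sim (taylor (LApp M Q)) (taylor (LApp N Q)).
Proof.
  intros H t Ht. apply NF_iff in Ht. destruct Ht as [e [[s [q [Hs [Hq ->]]]] Hn]].
  apply (ctx_iff (fun x => RApp x q) (ctx_appL q) s (all_UNI _ s)) in Hn.
  destruct Hn as [x'' [H1 H2]].
  destruct (H x'') as [x3 [R3 N3]]. { apply NF_iff. eauto. }
  apply NF_iff in N3. destruct N3 as [s2 [Hs2 Hn2]].
  assert (req (RApp x'' q) (RApp x3 q)) by (constructor; auto; apply (proj1 req_refl)).
  destruct (NfR_req _ _ H2 _ H0) as [t' [Ht' R]].
  exists t'. split; auto. apply NF_iff. exists (RApp s2 q). split.
  - simpl. eauto.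
  - eapply (ctx_back (fun x => RApp x q) (ctx_appL q)); eauto.
Qed.

Lemma bag_nf_fwd : forall ts pre u, NfR (RBag (pre ++ map RLam ts)) u ->
  exists ts', Forall2 NfR ts ts' /\ NfR (RBag (pre ++ map RLam ts')) u.
Proof.
  induction ts; intros pre u H.
  - exists []. split; auto.
  - simpl in H.
    apply (ctx_iff (fun x => RBag (pre ++ RLam x :: map RLam ts)) (ctx_lam pre (map RLam ts)) a
             (all_UNI _ a)) in H.
    destruct H as [x'' [H1 H2]].
    replace (pre ++ RLam x'' :: map RLam ts) with ((pre ++ [RLam x'']) ++ map RLam ts) in H2
      by (rewrite <- app_assoc; reflexivity).
    destruct (IHts _ _ H2) as [ts' [F H3]]. exists (x'' :: ts'). split; auto.
    simpl. rewrite <- app_assoc in H3. exact H3.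
Qed.

Lemma bag_nf_bwd ts ts' : Forall2 NfR ts ts' -> forall pre u,
  NfR (RBag (pre ++ map RLam ts')) u -> NfR (RBag (pre ++ map RLam ts)) u.
Proof.
  induction 1; intros pre u H1; auto.
  simpl in *.
  replace (pre ++ RLam y :: map RLam l') with ((pre ++ [RLam y]) ++ map RLam l') in H1
    by (rewrite <- app_assoc; reflexivity).
  apply IHForall2 in H1. rewrite <- app_assoc in H1. simpl in H1.
  eapply (ctx_back (fun z => RBag (pre ++ RLam z :: map RLam l)) (ctx_lam pre (map RLam l))); eauto.
Qed.

Lemma bag_normal ts : Forall rnormal ts -> rnormal (RBag (map RLam ts)).
Proof.
  intros HF [S HS]. apply inv_bag in HS. destruct HS as [b1 [v [b2 [V [E [HV _]]]]]].
  inversion HV; subst.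
  assert (In (RLam t) (map RLam ts)) by (rewrite E; apply in_elt).
  apply in_map_iff in H0. destruct H0 as [x [Ex Hx]]. injection Ex; intros; subst.
  rewrite Forall_forall in HF. apply (HF _ Hx). eauto.
Qed.

Lemma Forall2_normal ts ts' : Forall2 NfR ts ts' -> Forall rnormal ts'.
Proof. induction 1; constructor; auto. eapply NfR_out_normal; eauto. Qed.

Lemma Sim_lam M N : Sim (taylor M) (taylor N) -> Sim (taylor (LLam M)) (taylor (LLam N)).
Proof.
  intros H t Ht. apply NF_iff in Ht. destruct Ht as [e [[ts [Hts ->]] Hn]].
  destruct (bag_nf_fwd ts [] t Hn) as [ts' [F2 Hn']]. simpl in Hn'.
  pose proof (Forall2_normal _ _ F2) as Nts'.
  apply NfR_normal in Hn'; [|apply bag_normal; auto]. subst t.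
  assert (exists ns t3s, Forall (taylor N) ns /\ Forall2 NfR ns t3s /\ Forall2 req ts' t3s)
    as [ns [t3s [Fns [F3 FR]]]].
  { clear Nts' Hn. induction F2.
    - exists [], []. repeat constructor.
    - inversion Hts; subst. destruct (IHF2 H4) as [ns [t3s [A1 [A2 A3]]]].
      destruct (H y) as [y3 [R3 N3]]. { apply NF_iff. eauto. }
      apply NF_iff in N3. destruct N3 as [n3 [Hn3 Hnn3]].
      exists (n3 :: ns), (y3 :: t3s). repeat constructor; auto. }
  exists (RBag (map RLam t3s)). split.
  - apply req_bag with (map RLam ts'). apply Permutation_refl.
    clear -FR. induction FR; simpl; constructor; auto. constructor. auto.
  - apply NF_iff. exists (RBag (map RLam ns)). split.
    + simpl. eauto.
    + apply (bag_nf_bwd _ _ F3 [] _). simpl. constructor. apply bag_normal.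
      eapply Forall2_normal; eauto.
Qed.

Lemma Sim_fold : forall Vs X Y, Sim (taylor X) (taylor Y) ->
  Sim (taylor (fold_left LApp Vs X)) (taylor (fold_left LApp Vs Y)).
Proof.
  induction Vs; intros X Y H; simpl; auto. apply IHVs. apply Sim_app. auto.
Qed.

Lemma Sim_lams : forall n X Y, Sim (taylor X) (taylor Y) -> Sim (taylor (lams n X)) (taylor (lams n Y)).
Proof. induction n; intros; simpl; auto. apply Sim_lam. auto. Qed.

Theorem lemma4p6 (M N : lterm) :
  mset_eq (NF (taylor M)) (NF (taylor N)) ->
  forall (n : nat) (Vs : list lterm), Forall is_lval Vs ->
    mset_eq (NF (taylor (plug n Vs M))) (NF (taylor (plug n Vs N))).
Proof.
  intros HMN n Vs _.
  assert (S1 : Sim (taylor M) (taylor N)).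
  { intros t Ht. apply (HMN t). exists t. split; auto. apply (proj1 req_refl). }
  assert (S2 : Sim (taylor N) (taylor M)).
  { intros t Ht. apply (HMN t). exists t. split; auto. apply (proj1 req_refl). }
  assert (P1 := Sim_fold Vs _ _ (Sim_lams n _ _ S1)).
  assert (P2 := Sim_fold Vs _ _ (Sim_lams n _ _ S2)).
  unfold plug. intro t. split.
  - intros [t0 [R0 H0]]. destruct (P1 t0 H0) as [t1 [R1 H1]]. exists t1. split; auto.
    eapply (proj1 req_trans); eauto.
  - intros [t0 [R0 H0]]. destruct (P2 t0 H0) as [t1 [R1 H1]]. exists t1. split; auto.
    eapply (proj1 req_trans); eauto.
Qed.
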